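(* Fix $l^0_{jk},l^0_{ki},l^0_{ij}>0$ and let $\mathcal{W}^{ijk}$ be the set of $(w_i,w_j,w_k)\in\mathbb{R}^3$ for which $l_{ab}>0$ defined by $\cosh\frac{l_{ab}}{2}=e^{w_a+w_b}\cosh\frac{l^0_{ab}}{2}$ exist for $ab\in\{jk,ki,ij\}$. For $(w_i,w_j,w_k)\in\mathcal{W}^{ijk}$, let $\theta^i_{jk},\theta^j_{ki},\theta^k_{ij}$ be the lengths of the sides opposite to the sides of lengths $l_{jk},l_{ki},l_{ij}$ in the hyperbolic right-angled hexagon whose three pairwise non-adjacent sides have lengths $l_{jk},l_{ki},l_{ij}$. Then the differential 1-form $\theta^i_{jk}\,dw_i+\theta^j_{ki}\,dw_j+\theta^k_{ij}\,dw_k$ is closed on $\mathcal{W}^{ijk}$, and for any $c\in\mathcal{W}^{ijk}$ the integral $$\mathcal{E}(w_i,w_j,w_k)=\int_c^{(w_i,w_j,w_k)}\left(\theta^i_{jk}\,dw_i+\theta^j_{ki}\,dw_j+\theta^k_{ij}\,dw_k\right)$$ is a well-defined strictly concave function on $\mathcal{W}^{ijk}$ satisfying $\frac{\partial\mathcal{E}}{\partial w_i}=\theta^i_{jk}$, $\frac{\partial\mathcal{E}}{\partial w_j}=\theta^j_{ki}$, $\frac{\partial\mathcal{E}}{\partial w_k}=\theta^k_{ij}$.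
   Context: For any three positive numbers there is a hyperbolic right-angled hexagon, unique up to isometry, whose three pairwise non-adjacent sides have these lengths. *)

(* Defs.v *)
From Stdlib Require Import Reals.
From Coquelicot Require Import Coquelicot.
Open Scope R_scope.

Definition acosh (x : R) : R := ln (x + sqrt (x ^ 2 - 1)).

(* The length l_ab > 0 with cosh (l_ab / 2) = e^(w_a + w_b) cosh (l0_ab / 2)
   (meaningful when the right-hand side is > 1). *)
Definition edge_len (l0 wa wb : R) : R :=
  2 * acosh (exp (wa + wb) * cosh (l0 / 2)).

(* The domain W^{ijk}: the l_ab > 0 exist, i.e. the right-hand sides exceed 1. *)
Definition inW (l0jk l0ki l0ij : R) (wi wj wk : R) : Prop :=
  1 < exp (wj + wk) * cosh (l0jk / 2) /\
  1 < exp (wk + wi) * cosh (l0ki / 2) /\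
  1 < exp (wi + wj) * cosh (l0ij / 2).

(* In the hyperbolic right-angled hexagon whose pairwise non-adjacent sides
   have lengths a, b, c, the side opposite to the side of length a has length
   given by the hyperbolic cosine law for right-angled hexagons. *)
Definition hex_opp (a b c : R) : R :=
  acosh ((cosh a + cosh b * cosh c) / (sinh b * sinh c)).

Definition theta_i (l0jk l0ki l0ij wi wj wk : R) : R :=
  hex_opp (edge_len l0jk wj wk) (edge_len l0ki wk wi) (edge_len l0ij wi wj).
Definition theta_j (l0jk l0ki l0ij wi wj wk : R) : R :=
  hex_opp (edge_len l0ki wk wi) (edge_len l0ij wi wj) (edge_len l0jk wj wk).
Definition theta_k (l0jk l0ki l0ij wi wj wk : R) : R :=
  hex_opp (edge_len l0ij wi wj) (edge_len l0jk wj wk) (edge_len l0ki wk wi).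

(* E(x) = integral of theta_i dw_i + theta_j dw_j + theta_k dw_k along the
   straight segment from c = (ci,cj,ck) to x = (wi,wj,wk). *)
Definition energy (l0jk l0ki l0ij ci cj ck wi wj wk : R) : R :=
  RInt (fun t =>
     let xi := ci + t * (wi - ci) in
     let xj := cj + t * (wj - cj) in
     let xk := ck + t * (wk - ck) in
     theta_i l0jk l0ki l0ij xi xj xk * (wi - ci)
   + theta_j l0jk l0ki l0ij xi xj xk * (wj - cj)
   + theta_k l0jk l0ki l0ij xi xj xk * (wk - ck)) 0 1.

(* Main.v *)
Require Import Defs.
From Stdlib Require Import Reals Lra Psatz.
From Coquelicot Require Import Coquelicot.
Open Scope R_scope.

Lemma acosh_pos_aux X : 1 <= X -> 0 < X + sqrt (X^2-1).
Proof. intros; pose proof (sqrt_pos (X^2-1)); lra. Qed.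

Lemma exp_2ln y : 0 < y -> exp (2 * ln y) = y * y.
Proof. intros; replace (2 * ln y) with (ln y + ln y) by ring; rewrite exp_plus, exp_ln; auto. Qed.

Lemma inv_acosh_aux X : 1 <= X -> / (X + sqrt (X^2-1)) = X - sqrt (X^2-1).
Proof.
  intros H. assert (Hs := sqrt_sqrt (X^2-1) ltac:(nra)).
  assert (Hp := acosh_pos_aux X H).
  field_simplify_eq; [| lra]. nra.
Qed.

Lemma cosh_2acosh X : 1 <= X -> cosh (2 * acosh X) = 2*X^2-1.
Proof.
  intros H. unfold cosh, acosh. assert (Hs := sqrt_sqrt (X^2-1) ltac:(nra)).
  assert (Hp := acosh_pos_aux X H).
  rewrite exp_Ropp, exp_2ln by auto. rewrite Rinv_mult, inv_acosh_aux by auto. nra.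
Qed.

Lemma sinh_2acosh X : 1 <= X -> sinh (2 * acosh X) = 2*X*sqrt(X^2-1).
Proof.
  intros H. unfold sinh, acosh. assert (Hs := sqrt_sqrt (X^2-1) ltac:(nra)).
  assert (Hp := acosh_pos_aux X H).
  rewrite exp_Ropp, exp_2ln by auto. rewrite Rinv_mult, inv_acosh_aux by auto. nra.
Qed.

Lemma is_derive_eqv (f : R -> R) x l l' : is_derive f x l -> l = l' -> is_derive f x l'.
Proof. intros; subst; auto. Qed.

Lemma is_derive_acosh y : 1 < y -> is_derive acosh y (/ sqrt (y^2-1)).
Proof.
  intros H. unfold acosh.
  assert (Hq : 0 < y^2-1) by nra.
  assert (Hs := sqrt_lt_R0 _ Hq). assert (Hss := sqrt_sqrt _ (Rlt_le _ _ Hq)).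
  auto_derive; replace (y * (y * 1) + - (1)) with (y^2-1) by ring.
  - repeat split; lra.
  - field_simplify_eq; [| split; lra]. nra.
Qed.

Lemma Dplus (f g : R -> R) x df dg : is_derive f x df -> is_derive g x dg ->
  is_derive (fun t => f t + g t) x (df + dg).
Proof. intros; apply (is_derive_plus f g); auto. Qed.
Lemma Dminus (f g : R -> R) x df dg : is_derive f x df -> is_derive g x dg ->
  is_derive (fun t => f t - g t) x (df - dg).
Proof. intros; apply (is_derive_minus f g); auto. Qed.
Lemma Dmult (f g : R -> R) x df dg : is_derive f x df -> is_derive g x dg ->
  is_derive (fun t => f t * g t) x (df * g x + f x * dg).
Proof. intros; apply (is_derive_mult f g); auto. intros; apply Rmult_comm. Qed.
Lemma Dconst (a x : R) : is_derive (fun _ => a) x 0.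
Proof. apply (is_derive_const a x). Qed.
Lemma Did (x : R) : is_derive (fun t => t) x 1.
Proof. apply (is_derive_id x). Qed.
Lemma Dcomp (phi f : R -> R) x dphi df : is_derive phi (f x) dphi -> is_derive f x df ->
  is_derive (fun t => phi (f t)) x (df * dphi).
Proof. intros; apply (is_derive_comp phi f); auto. Qed.
Lemma Ddiv (f g : R -> R) x df dg : is_derive f x df -> is_derive g x dg -> g x <> 0 ->
  is_derive (fun t => f t / g t) x ((df * g x - f x * dg) / g x ^ 2).
Proof. intros; apply is_derive_div; auto. Qed.
Lemma Dexp x : is_derive exp x (exp x).
Proof. apply is_derive_exp. Qed.
Lemma Dcosh x : is_derive cosh x (sinh x).
Proof. apply is_derive_Reals, derivable_pt_lim_cosh. Qed.
Lemma Dsinh x : is_derive sinh x (cosh x).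
Proof. apply is_derive_Reals, derivable_pt_lim_sinh. Qed.

Lemma cosh_sinh_sq x : cosh x ^ 2 - sinh x ^ 2 = 1.
Proof.
  unfold cosh, sinh. assert (H : exp x * exp (-x) = 1).
  { rewrite <- exp_plus. replace (x + -x) with 0 by ring. apply exp_0. }
  nra.
Qed.
Lemma cosh_minus_sinh x : 0 < cosh x - sinh x.
Proof. unfold cosh, sinh. pose proof (exp_pos (-x)). lra. Qed.
Lemma cosh_ge1 x : 1 <= cosh x.
Proof.
  unfold cosh. assert (H : exp x * exp (-x) = 1).
  { rewrite <- exp_plus. replace (x + -x) with 0 by ring. apply exp_0. }
  pose proof (exp_pos x); pose proof (exp_pos (-x)). pose proof (pow2_ge_0 (exp x - exp (-x))). nra.
Qed.

Definition DD (c1 c2 c3 : R) := c1^2 + c2^2 + c3^2 + 2*c1*c2*c3 - 1.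

Lemma DD_pos c1 c2 c3 : 1 <= c1 -> 1 <= c2 -> 1 <= c3 -> 0 < DD c1 c2 c3.
Proof. intros; unfold DD. assert (c1*c2 >= 1) by nra. assert (c1*c2*c3 >= 1) by nra. nra. Qed.

Lemma alg_hex ca cb cc sa sb sc da db dc s : sb <> 0 -> sc <> 0 -> s <> 0 ->
  sb^2 = cb^2-1 -> sc^2 = cc^2-1 ->
  ((da * sa + (db * sb * cc + cb * (dc * sc))) * (sb * sc) -
   (ca + cb * cc) * (db * cb * sc + sb * (dc * cc))) /
  (sb * sc) ^ 2 * / (s / (sb * sc)) =
  (sa * da - (cc + ca * cb) * (db / sb) - (cb + ca * cc) * (dc / sc)) / s.
Proof.
  intros Hb Hc Hs Eb Ec.
  assert (Z : (da * sa + (db * sb * cc + cb * (dc * sc))) * (sb * sc) -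
   (ca + cb * cc) * (db * cb * sc + sb * (dc * cc))
   - (sb*sc*(sa*da) - sc*(db*(cc+ca*cb)) - sb*(dc*(cb+ca*cc)))
   = sc*(db*cc*(sb^2-(cb^2-1))) + sb*(cb*dc*(sc^2-(cc^2-1)))) by ring.
  rewrite Eb, Ec in Z. replace (cb^2-1-(cb^2-1)) with 0 in Z by ring.
  replace (cc^2-1-(cc^2-1)) with 0 in Z by ring.
  replace ((da * sa + (db * sb * cc + cb * (dc * sc))) * (sb * sc) -
   (ca + cb * cc) * (db * cb * sc + sb * (dc * cc))) with
   (sb*sc*(sa*da) - sc*(db*(cc+ca*cb)) - sb*(dc*(cb+ca*cc))) by lra.
  field. tauto.
Qed.

Lemma hex_path (a b c : R -> R) (t da db dc : R) :
  is_derive a t da -> is_derive b t db -> is_derive c t dc ->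
  0 < sinh (b t) -> 0 < sinh (c t) ->
  is_derive (fun t => hex_opp (a t) (b t) (c t)) t
   ((sinh (a t) * da - (cosh (c t) + cosh (a t) * cosh (b t)) * (db / sinh (b t))
      - (cosh (b t) + cosh (a t) * cosh (c t)) * (dc / sinh (c t)))
    / sqrt (DD (cosh (a t)) (cosh (b t)) (cosh (c t)))).
Proof.
  intros Ha Hb Hc Psb Psc. unfold hex_opp.
  set (ca := cosh (a t)); set (cb := cosh (b t)); set (cc := cosh (c t)).
  set (sa := sinh (a t)); set (sb := sinh (b t)); set (sc := sinh (c t)).
  set (y := (ca + cb * cc) / (sb * sc)).
  assert (Ea := cosh_sinh_sq (a t)); assert (Eb := cosh_sinh_sq (b t));
  assert (Ec := cosh_sinh_sq (c t)).
  assert (Ga := cosh_ge1 (a t)); assert (Gb := cosh_ge1 (b t)); assert (Gc := cosh_ge1 (c t)).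
  assert (Lb := cosh_minus_sinh (b t)); assert (Lc := cosh_minus_sinh (c t)).
  fold ca cb cc sa sb sc in Ea, Eb, Ec, Ga, Gb, Gc, Lb, Lc, Psb, Psc.
  assert (Hy : 1 < y).
  { unfold y. apply Rmult_lt_reg_r with (sb * sc). nra.
    unfold Rdiv. rewrite Rmult_assoc, Rinv_l by nra. nra. }
  assert (HD := DD_pos ca cb cc Ga Gb Gc).
  assert (Hy2 : y^2 - 1 = (sqrt (DD ca cb cc) / (sb * sc))^2).
  { unfold Rdiv. rewrite Rpow_mult_distr, pow2_sqrt by lra.
    assert (E1 : y^2 - 1 = ((ca + cb*cc)^2 - sb^2*sc^2) * / (sb*sc)^2).
    { unfold y. field. lra. }
    rewrite E1. replace ((ca + cb*cc)^2 - sb^2*sc^2) with (DD ca cb cc).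
    field. nra.
    unfold DD. replace (sb^2) with (cb^2-1) by lra. replace (sc^2) with (cc^2-1) by lra. ring. }
  assert (Hsq : sqrt (y^2-1) = sqrt (DD ca cb cc) / (sb * sc)).
  { rewrite Hy2, sqrt_pow2; auto. apply Rlt_le, Rdiv_lt_0_compat. apply sqrt_lt_R0; auto. nra. }
  eapply is_derive_eqv.
  { apply (Dcomp acosh (fun t => (cosh (a t) + cosh (b t) * cosh (c t)) / (sinh (b t) * sinh (c t)))).
    apply is_derive_acosh. exact Hy.
    apply Ddiv. apply Dplus. apply (Dcomp cosh a); [apply Dcosh | exact Ha].
    apply Dmult. apply (Dcomp cosh b); [apply Dcosh | exact Hb].
    apply (Dcomp cosh c); [apply Dcosh | exact Hc].
    apply Dmult. apply (Dcomp sinh b); [apply Dsinh | exact Hb].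
    apply (Dcomp sinh c); [apply Dsinh | exact Hc].
    fold sb sc. nra. }
  fold ca cb cc sa sb sc y. rewrite Hsq.
  assert (0 < sqrt (DD ca cb cc)) by (apply sqrt_lt_R0; auto).
  change (cosh (a t)) with ca; change (cosh (b t)) with cb; change (cosh (c t)) with cc;
  change (sinh (b t)) with sb; change (sinh (c t)) with sc.
  apply alg_hex; lra.
Qed.

Definition CC (l0 : R) := cosh (l0/2).
Definition XX (l0 a b : R) := exp (a+b) * cosh (l0/2).
Definition cc (l0 a b : R) := 2 * (XX l0 a b)^2 - 1.
Definition Hd (c1 c2 c3 : R) := -2*((c3+c1*c2)/(c2-1) + (c2+c1*c3)/(c3-1)) / sqrt (DD c1 c2 c3).
Definition Ho (c1 c2 c3 : R) := 2*(c3-c1-c2-1)/((c3-1)*sqrt (DD c1 c2 c3)).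

Lemma DD_sym23 c1 c2 c3 : DD c1 c3 c2 = DD c1 c2 c3.
Proof. unfold DD; ring. Qed.
Lemma DD_rot c1 c2 c3 : DD c2 c3 c1 = DD c1 c2 c3.
Proof. unfold DD; ring. Qed.
Lemma DD_sym12 c1 c2 c3 : DD c2 c1 c3 = DD c1 c2 c3.
Proof. unfold DD; ring. Qed.

Lemma edge_path l0 (ga gb : R -> R) (t da db : R) :
  is_derive ga t da -> is_derive gb t db -> 1 < XX l0 (ga t) (gb t) ->
  is_derive (fun t => edge_len l0 (ga t) (gb t)) t
    (2 * (XX l0 (ga t) (gb t) * (da + db) * / sqrt ((XX l0 (ga t) (gb t))^2 - 1))).
Proof.
  intros Ha Hb HX. unfold edge_len.
  apply is_derive_scal.
  eapply is_derive_eqv.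
  { apply (Dcomp acosh (fun t => exp (ga t + gb t) * cosh (l0/2))).
    apply is_derive_acosh. exact HX.
    apply Dmult. apply (Dcomp exp (fun t => ga t + gb t)). apply Dexp. apply Dplus; eauto.
    apply Dconst. }
  cbv beta. match goal with |- ?a = ?b => change (@eq R a b) end. unfold XX. ring.
Qed.

Lemma alg_theta X1 X2 X3 s1 s2 s3 u v w :
  1 < X1 -> 1 < X2 -> 1 < X3 -> s1 = sqrt (X1^2-1) -> s2 = sqrt (X2^2-1) -> s3 = sqrt (X3^2-1) ->
  let c1 := 2*X1^2-1 in let c2 := 2*X2^2-1 in let c3 := 2*X3^2-1 in
  (2*X1*s1 * (2 * (X1 * (v + w) * / s1)) -
   (c3 + c1*c2) * ((2 * (X2 * (w + u) * / s2)) / (2*X2*s2)) -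
   (c2 + c1*c3) * ((2 * (X3 * (u + v) * / s3)) / (2*X3*s3))) / sqrt (DD c1 c2 c3)
  = Hd c1 c2 c3 * u + Ho c1 c2 c3 * v + Ho c1 c3 c2 * w.
Proof.
  intros H1 H2 H3 E1 E2 E3 c1 c2 c3.
  assert (P1 : 0 < s1) by (subst; apply sqrt_lt_R0; nra).
  assert (P2 : 0 < s2) by (subst; apply sqrt_lt_R0; nra).
  assert (P3 : 0 < s3) by (subst; apply sqrt_lt_R0; nra).
  assert (Q2 : s2 * s2 = X2^2-1) by (subst; apply sqrt_sqrt; nra).
  assert (Q3 : s3 * s3 = X3^2-1) by (subst; apply sqrt_sqrt; nra).
  assert (K : forall X s z, s <> 0 -> X <> 0 -> (2 * (X * z * / s)) / (2*X*s) = z / (s*s)).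
  { intros; field; auto. }
  rewrite !K by lra. rewrite Q2, Q3.
  unfold Hd, Ho. rewrite (DD_sym23 c1 c2 c3).
  assert (0 < DD c1 c2 c3) by (apply DD_pos; unfold c1, c2, c3; nra).
  assert (0 < sqrt (DD c1 c2 c3)) by (apply sqrt_lt_R0; auto).
  unfold c1, c2, c3 in *. field. repeat split; nra.
Qed.

Lemma theta_i_path A B C (gi gj gk : R -> R) (t dgi dgj dgk : R) :
  is_derive gi t dgi -> is_derive gj t dgj -> is_derive gk t dgk ->
  inW A B C (gi t) (gj t) (gk t) ->
  is_derive (fun t => theta_i A B C (gi t) (gj t) (gk t)) t
    (Hd (cc A (gj t) (gk t)) (cc B (gk t) (gi t)) (cc C (gi t) (gj t)) * dgi
   + Ho (cc A (gj t) (gk t)) (cc B (gk t) (gi t)) (cc C (gi t) (gj t)) * dgj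
   + Ho (cc A (gj t) (gk t)) (cc C (gi t) (gj t)) (cc B (gk t) (gi t)) * dgk).
Proof.
  intros Hi Hj Hk [W1 [W2 W3]]. unfold theta_i.
  fold (XX A (gj t) (gk t)) in W1. fold (XX B (gk t) (gi t)) in W2. fold (XX C (gi t) (gj t)) in W3.
  eapply is_derive_eqv.
  { apply hex_path.
    apply edge_path; eauto. apply edge_path; eauto. apply edge_path; eauto.
    - unfold edge_len. fold (XX B (gk t) (gi t)). rewrite sinh_2acosh by lra.
      assert (0 < sqrt (XX B (gk t) (gi t) ^ 2 - 1)) by (apply sqrt_lt_R0; nra). nra.
    - unfold edge_len. fold (XX C (gi t) (gj t)). rewrite sinh_2acosh by lra.
      assert (0 < sqrt (XX C (gi t) (gj t) ^ 2 - 1)) by (apply sqrt_lt_R0; nra). nra. }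
  unfold edge_len. fold (XX A (gj t) (gk t)) (XX B (gk t) (gi t)) (XX C (gi t) (gj t)).
  rewrite !cosh_2acosh, !sinh_2acosh by lra.
  unfold cc. apply alg_theta; auto.
Qed.

Lemma theta_j_path A B C (gi gj gk : R -> R) (t dgi dgj dgk : R) :
  is_derive gi t dgi -> is_derive gj t dgj -> is_derive gk t dgk ->
  inW A B C (gi t) (gj t) (gk t) ->
  is_derive (fun t => theta_j A B C (gi t) (gj t) (gk t)) t
    (Ho (cc B (gk t) (gi t)) (cc A (gj t) (gk t)) (cc C (gi t) (gj t)) * dgi
   + Hd (cc B (gk t) (gi t)) (cc C (gi t) (gj t)) (cc A (gj t) (gk t)) * dgj
   + Ho (cc B (gk t) (gi t)) (cc C (gi t) (gj t)) (cc A (gj t) (gk t)) * dgk).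
Proof.
  intros Hi Hj Hk [W1 [W2 W3]].
  eapply is_derive_eqv.
  { apply (theta_i_path B C A gj gk gi t dgj dgk dgi); auto. repeat split; auto. }
  match goal with |- ?a = ?b => change (@eq R a b) end. ring.
Qed.

Lemma theta_k_path A B C (gi gj gk : R -> R) (t dgi dgj dgk : R) :
  is_derive gi t dgi -> is_derive gj t dgj -> is_derive gk t dgk ->
  inW A B C (gi t) (gj t) (gk t) ->
  is_derive (fun t => theta_k A B C (gi t) (gj t) (gk t)) t
    (Ho (cc C (gi t) (gj t)) (cc A (gj t) (gk t)) (cc B (gk t) (gi t)) * dgi
   + Ho (cc C (gi t) (gj t)) (cc B (gk t) (gi t)) (cc A (gj t) (gk t)) * dgj
   + Hd (cc C (gi t) (gj t)) (cc A (gj t) (gk t)) (cc B (gk t) (gi t)) * dgk).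
Proof.
  intros Hi Hj Hk [W1 [W2 W3]].
  eapply is_derive_eqv.
  { apply (theta_i_path C A B gk gi gj t dgk dgi dgj); auto. repeat split; auto. }
  match goal with |- ?a = ?b => change (@eq R a b) end. ring.
Qed.

Lemma Ho_sym c1 c2 c3 : Ho c1 c2 c3 = Ho c2 c1 c3.
Proof. unfold Ho. rewrite DD_sym12. f_equal. ring. Qed.

Lemma quad_neg c1 c2 c3 u v w : 1 < c1 -> 1 < c2 -> 1 < c3 -> (u <> 0 \/ v <> 0 \/ w <> 0) ->
  (Hd c1 c2 c3 * u + Ho c1 c2 c3 * v + Ho c1 c3 c2 * w) * u
+ (Ho c2 c1 c3 * u + Hd c2 c3 c1 * v + Ho c2 c3 c1 * w) * v
+ (Ho c3 c1 c2 * u + Ho c3 c2 c1 * v + Hd c3 c1 c2 * w) * w < 0.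
Proof.
  intros H1 H2 H3 Hn.
  unfold Hd, Ho.
  rewrite (DD_sym23 c1 c2 c3), (DD_sym12 c1 c2 c3), (DD_rot c1 c2 c3).
  replace (DD c3 c1 c2) with (DD c1 c2 c3) by (unfold DD; ring).
  replace (DD c3 c2 c1) with (DD c1 c2 c3) by (unfold DD; ring).
  assert (HD : 0 < DD c1 c2 c3) by (apply DD_pos; lra).
  assert (Hs : 0 < sqrt (DD c1 c2 c3)) by (apply sqrt_lt_R0; auto).
  set (s := sqrt (DD c1 c2 c3)) in *.
  set (a1 := c1 - 1). set (a2 := c2 - 1). set (a3 := c3 - 1).
  set (F := 2*a1*u*u+2*a2*v*v+2*a3*w*w+(u-v)^2+(v-w)^2+(w-u)^2
     +(a1+a2+2)/a3*(u+v)^2+(a2+a3+2)/a1*(v+w)^2+(a3+a1+2)/a2*(w+u)^2).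
  assert (Hq : forall k, 0 < k -> 0 <= k * ((u+v)^2) /\ 0 <= k * ((v+w)^2) /\ 0 <= k * ((w+u)^2)).
  { intros k Hk; repeat split; apply Rmult_le_pos; try lra; apply pow2_ge_0. }
  assert (HF : 0 < F).
  { unfold F. assert (0 < a1) by (unfold a1; lra). assert (0 < a2) by (unfold a2; lra).
    assert (0 < a3) by (unfold a3; lra).
    destruct (Hq ((a1+a2+2)/a3)) as [Q1 _]. apply Rdiv_lt_0_compat; lra.
    destruct (Hq ((a2+a3+2)/a1)) as [_ [Q2 _]]. apply Rdiv_lt_0_compat; lra.
    destruct (Hq ((a3+a1+2)/a2)) as [_ [_ Q3]]. apply Rdiv_lt_0_compat; lra.
    pose proof (pow2_ge_0 (u-v)); pose proof (pow2_ge_0 (v-w)); pose proof (pow2_ge_0 (w-u)).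
    assert (0 < a1*u*u + a2*v*v + a3*w*w).
    { assert (0 <= a1*(u*u)) by (apply Rmult_le_pos; nra).
      assert (0 <= a2*(v*v)) by (apply Rmult_le_pos; nra).
      assert (0 <= a3*(w*w)) by (apply Rmult_le_pos; nra).
      destruct Hn as [Hn|[Hn|Hn]].
      - pose proof (Rsqr_pos_lt u Hn); unfold Rsqr in *.
        assert (0 < a1*(u*u)) by (apply Rmult_lt_0_compat; lra). lra.
      - pose proof (Rsqr_pos_lt v Hn); unfold Rsqr in *.
        assert (0 < a2*(v*v)) by (apply Rmult_lt_0_compat; lra). lra.
      - pose proof (Rsqr_pos_lt w Hn); unfold Rsqr in *.
        assert (0 < a3*(w*w)) by (apply Rmult_lt_0_compat; lra). lra. }
    lra. }
  match goal with |- ?L < 0 => replace L with (-(2/s)*F) end.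
  { assert (0 < 2/s) by (apply Rdiv_lt_0_compat; lra). nra. }
  unfold F, a1, a2, a3. field. repeat split; lra.
Qed.

Section Cont.
Context {U : UniformSpace}.
Lemma Cplus (f g : U -> R) x : continuous f x -> continuous g x -> continuous (fun y => f y + g y) x.
Proof. intros; apply (continuous_plus f g); auto. Qed.
Lemma Cmult (f g : U -> R) x : continuous f x -> continuous g x -> continuous (fun y => f y * g y) x.
Proof. intros; apply (@continuous_mult U R_AbsRing f g); auto. Qed.
Lemma Cconst (a : R) x : continuous (fun _ : U => a) x.
Proof. apply continuous_const. Qed.
Lemma Ccomp (f : U -> R) (phi : R -> R) x : continuous f x -> continuous phi (f x) ->
  continuous (fun y => phi (f y)) x.
Proof. intros; apply (continuous_comp f phi); auto. Qed.
Lemma Copp (f : U -> R) x : continuous f x -> continuous (fun y => - f y) x.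
Proof. intros; apply (continuous_opp f); auto. Qed.
Lemma Cminus (f g : U -> R) x : continuous f x -> continuous g x -> continuous (fun y => f y - g y) x.
Proof. intros; apply Cplus; auto; apply Copp; auto. Qed.
Lemma Cinv (f : U -> R) x : continuous f x -> f x <> 0 -> continuous (fun y => / f y) x.
Proof. intros; apply (Ccomp f Rinv); auto. apply continuous_Rinv; auto. Qed.
Lemma Cdiv (f g : U -> R) x : continuous f x -> continuous g x -> g x <> 0 -> continuous (fun y => f y / g y) x.
Proof. intros; unfold Rdiv; apply Cmult; auto; apply Cinv; auto. Qed.
Lemma Cpow2 (f : U -> R) x : continuous f x -> continuous (fun y => f y ^ 2) x.
Proof. intros. apply (continuous_ext (fun y => f y * f y)). intros; simpl; ring. apply Cmult; auto. Qed.

Lemma cont_pos_loc (f : U -> R) x : continuous f x -> 0 < f x -> locally x (fun y => 0 < f y).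
Proof.
  intros Hc Hp. apply Hc. exists (mkposreal _ Hp). intros z Hz.
  unfold ball in Hz; simpl in Hz; unfold AbsRing_ball, abs, minus, plus, opp in Hz; simpl in Hz.
  apply Rabs_lt_between' in Hz. lra.
Qed.
End Cont.

Lemma Cr (phi : R -> R) (y d : R) : is_derive phi y d -> continuous phi y.
Proof. intros H. apply (@ex_derive_continuous R_AbsRing R_NormedModule phi y). exists d; exact H. Qed.

Ltac cont := repeat (match goal with
 | |- continuous (fun y => @?f y + @?g y) _ => apply (Cplus f g)
 | |- continuous (fun y => @?f y - @?g y) _ => apply (Cminus f g)
 | |- continuous (fun y => @?f y / @?g y) _ => apply (Cdiv f g)
 | |- continuous (fun y => @?f y * @?g y) _ => apply (Cmult f g)
 | |- continuous (fun y => - @?f y) _ => apply (Copp f)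
 | |- continuous (fun y => @?f y ^ 2) _ => apply (Cpow2 f)
 | |- continuous (fun y => exp (@?f y)) _ => apply (Ccomp f exp); [| apply continuous_exp]
 | |- continuous (fun y => sqrt (@?f y)) _ => apply (Ccomp f sqrt); [| apply continuous_sqrt]
 | |- continuous (fun _ => ?c) _ => apply Cconst
 | |- continuous _ _ => assumption
 end).

Lemma cc_gt1 l0 a b : 1 < XX l0 a b -> 1 < cc l0 a b.
Proof. unfold cc; intros; nra. Qed.

Lemma sinh_edge_pos l0 a b : 1 < XX l0 a b -> 0 < sinh (edge_len l0 a b).
Proof.
  intros H. unfold edge_len. fold (XX l0 a b). rewrite sinh_2acosh by lra.
  assert (0 < sqrt (XX l0 a b ^ 2 - 1)) by (apply sqrt_lt_R0; nra). nra.
Qed.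

Lemma hex_arg_gt1 a b c : 0 < sinh b -> 0 < sinh c -> 1 < (cosh a + cosh b * cosh c) / (sinh b * sinh c).
Proof.
  intros Pb Pc.
  assert (Ga := cosh_ge1 a). assert (Lb := cosh_minus_sinh b); assert (Lc := cosh_minus_sinh c).
  apply Rmult_lt_reg_r with (sinh b * sinh c). nra.
  unfold Rdiv. rewrite Rmult_assoc, Rinv_l by nra. nra.
Qed.

Section Cont2.
Context {U : UniformSpace}.

Lemma cont_edge l0 (fa fb : U -> R) x : continuous fa x -> continuous fb x -> 1 < XX l0 (fa x) (fb x) ->
  continuous (fun y => edge_len l0 (fa y) (fb y)) x.
Proof.
  intros Ha Hb HX.
  apply (continuous_ext (fun y => edge_len l0 (fa y + fb y) 0)).
  { intros; unfold edge_len; rewrite Rplus_0_r; reflexivity. }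
  apply (Ccomp (fun y => fa y + fb y) (fun s => edge_len l0 s 0)). cont.
  eapply (Cr _ _ _ (edge_path l0 (fun s => s) (fun _ => 0) (fa x + fb x) 1 0 (Did _) (Dconst _ _) _)).
  Unshelve. unfold XX in *. rewrite Rplus_0_r. exact HX.
Qed.

Lemma cont_hex (fa fb fc : U -> R) x : continuous fa x -> continuous fb x -> continuous fc x ->
  0 < sinh (fb x) -> 0 < sinh (fc x) -> continuous (fun y => hex_opp (fa y) (fb y) (fc y)) x.
Proof.
  intros Ha Hb Hc Pb Pc. unfold hex_opp.
  apply (Ccomp (fun y => (cosh (fa y) + cosh (fb y) * cosh (fc y)) / (sinh (fb y) * sinh (fc y))) acosh).
  - assert (Cco : forall f : U -> R, continuous f x -> continuous (fun y => cosh (f y)) x).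
    { intros f Hf; apply (Ccomp f cosh); auto. apply (Cr _ _ _ (Dcosh _)). }
    assert (Csi : forall f : U -> R, continuous f x -> continuous (fun y => sinh (f y)) x).
    { intros f Hf; apply (Ccomp f sinh); auto. apply (Cr _ _ _ (Dsinh _)). }
    apply Cdiv. apply Cplus; auto. apply Cmult; auto. apply Cmult; auto. nra.
  - apply (Cr _ _ _ (is_derive_acosh _ (hex_arg_gt1 _ _ _ Pb Pc))).
Qed.

Lemma cont_theta_i A B C (fi fj fk : U -> R) x :
  continuous fi x -> continuous fj x -> continuous fk x -> inW A B C (fi x) (fj x) (fk x) ->
  continuous (fun y => theta_i A B C (fi y) (fj y) (fk y)) x.
Proof.
  intros Hi Hj Hk [W1 [W2 W3]]. unfold theta_i.
  apply cont_hex; try apply cont_edge; auto; apply sinh_edge_pos; auto.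
Qed.

Lemma cont_theta_j A B C (fi fj fk : U -> R) x :
  continuous fi x -> continuous fj x -> continuous fk x -> inW A B C (fi x) (fj x) (fk x) ->
  continuous (fun y => theta_j A B C (fi y) (fj y) (fk y)) x.
Proof.
  intros Hi Hj Hk [W1 [W2 W3]].
  apply (cont_theta_i B C A fj fk fi); auto. repeat split; auto.
Qed.

Lemma cont_theta_k A B C (fi fj fk : U -> R) x :
  continuous fi x -> continuous fj x -> continuous fk x -> inW A B C (fi x) (fj x) (fk x) ->
  continuous (fun y => theta_k A B C (fi y) (fj y) (fk y)) x.
Proof.
  intros Hi Hj Hk [W1 [W2 W3]].
  apply (cont_theta_i C A B fk fi fj); auto. repeat split; auto.
Qed.

Lemma cont_cc l0 (fa fb : U -> R) x : continuous fa x -> continuous fb x ->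
  continuous (fun y => cc l0 (fa y) (fb y)) x.
Proof. intros. unfold cc, XX. cont. Qed.

Lemma cont_DD (f1 f2 f3 : U -> R) x : continuous f1 x -> continuous f2 x -> continuous f3 x ->
  continuous (fun y => DD (f1 y) (f2 y) (f3 y)) x.
Proof. intros. unfold DD. cont. Qed.

Lemma cont_Hd (f1 f2 f3 : U -> R) x : continuous f1 x -> continuous f2 x -> continuous f3 x ->
  1 < f1 x -> 1 < f2 x -> 1 < f3 x -> continuous (fun y => Hd (f1 y) (f2 y) (f3 y)) x.
Proof.
  intros. unfold Hd.
  assert (0 < sqrt (DD (f1 x) (f2 x) (f3 x))) by (apply sqrt_lt_R0, DD_pos; lra).
  apply Cdiv; [| apply (Ccomp (fun y => DD (f1 y) (f2 y) (f3 y)) sqrt); [apply cont_DD; auto | apply continuous_sqrt] | lra].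
  cont; lra.
Qed.

Lemma cont_Ho (f1 f2 f3 : U -> R) x : continuous f1 x -> continuous f2 x -> continuous f3 x ->
  1 < f1 x -> 1 < f2 x -> 1 < f3 x -> continuous (fun y => Ho (f1 y) (f2 y) (f3 y)) x.
Proof.
  intros. unfold Ho.
  assert (0 < sqrt (DD (f1 x) (f2 x) (f3 x))) by (apply sqrt_lt_R0, DD_pos; lra).
  apply Cdiv. cont. apply Cmult. cont.
  apply (Ccomp (fun y => DD (f1 y) (f2 y) (f3 y)) sqrt); [apply cont_DD; auto | apply continuous_sqrt].
  apply Rmult_integral_contrapositive; split; lra.
Qed.
End Cont2.

Lemma expC_gt1 s l0 : 1 < exp s * cosh (l0/2) <-> 0 < s + ln (cosh (l0/2)).
Proof.
  assert (HC : 0 < cosh (l0/2)) by (pose proof (cosh_ge1 (l0/2)); lra).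
  rewrite <- (exp_ln _ HC) at 1. rewrite <- exp_plus. split; intros H.
  - destruct (Rle_or_lt (s + ln (cosh (l0/2))) 0) as [H0|H0]; auto.
    assert (exp (s + ln (cosh (l0 / 2))) <= exp 0).
    { destruct H0 as [H0|H0]. left; apply exp_increasing; auto. rewrite H0; lra. }
    rewrite exp_0 in H1; lra.
  - rewrite <- exp_0. apply exp_increasing; auto.
Qed.

Lemma inW_iff A B C wi wj wk : inW A B C wi wj wk <->
  (0 < wj + wk + ln (cosh (A/2)) /\ 0 < wk + wi + ln (cosh (B/2)) /\ 0 < wi + wj + ln (cosh (C/2))).
Proof. unfold inW. rewrite !expC_gt1. tauto. Qed.

Lemma convex_pos X Y t : 0 < X -> 0 < Y -> 0 <= t <= 1 -> 0 < (1-t)*X + t*Y.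
Proof.
  intros. destruct (Rle_or_lt t (1/2)).
  - assert (0 <= t*Y) by (apply Rmult_le_pos; lra).
    assert (0 < (1-t)*X) by (apply Rmult_lt_0_compat; lra). lra.
  - assert (0 <= (1-t)*X) by (apply Rmult_le_pos; lra).
    assert (0 < t*Y) by (apply Rmult_lt_0_compat; lra). lra.
Qed.

Lemma inW_conv A B C pi pj pk qi qj qk t :
  inW A B C pi pj pk -> inW A B C qi qj qk -> 0 <= t <= 1 ->
  inW A B C (pi + t*(qi-pi)) (pj + t*(qj-pj)) (pk + t*(qk-pk)).
Proof.
  rewrite !inW_iff. intros [P1 [P2 P3]] [Q1 [Q2 Q3]] Ht.
  pose proof (convex_pos _ _ t P1 Q1 Ht). pose proof (convex_pos _ _ t P2 Q2 Ht).
  pose proof (convex_pos _ _ t P3 Q3 Ht).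
  repeat split; match goal with |- 0 < ?e => (replace e with ((1-t)*(pj + pk + ln (cosh (A/2))) + t*(qj+qk+ln (cosh (A/2)))) by ring; auto) || (replace e with ((1-t)*(pk + pi + ln (cosh (B/2))) + t*(qk+qi+ln (cosh (B/2)))) by ring; auto) || (replace e with ((1-t)*(pi + pj + ln (cosh (C/2))) + t*(qi+qj+ln (cosh (C/2)))) by ring; auto) end.
Qed.

Lemma inW_loc {U : UniformSpace} A B C (fi fj fk : U -> R) x :
  continuous fi x -> continuous fj x -> continuous fk x -> inW A B C (fi x) (fj x) (fk x) ->
  locally x (fun y => inW A B C (fi y) (fj y) (fk y)).
Proof.
  intros Hi Hj Hk H. rewrite inW_iff in H. destruct H as [H1 [H2 H3]].
  assert (L1 := cont_pos_loc (fun y => fj y + fk y + ln (cosh (A/2))) x ltac:(cont) H1).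
  assert (L2 := cont_pos_loc (fun y => fk y + fi y + ln (cosh (B/2))) x ltac:(cont) H2).
  assert (L3 := cont_pos_loc (fun y => fi y + fj y + ln (cosh (C/2))) x ltac:(cont) H3).
  generalize (filter_and _ _ L1 (filter_and _ _ L2 L3)). apply filter_imp.
  intros y Hy. rewrite inW_iff. exact Hy.
Qed.

Definition h11 A B C pi pj pk := Hd (cc A pj pk) (cc B pk pi) (cc C pi pj).
Definition h12 A B C pi pj pk := Ho (cc A pj pk) (cc B pk pi) (cc C pi pj).
Definition h13 A B C pi pj pk := Ho (cc A pj pk) (cc C pi pj) (cc B pk pi).
Definition h21 A B C pi pj pk := Ho (cc B pk pi) (cc A pj pk) (cc C pi pj).
Definition h22 A B C pi pj pk := Hd (cc B pk pi) (cc C pi pj) (cc A pj pk).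
Definition h23 A B C pi pj pk := Ho (cc B pk pi) (cc C pi pj) (cc A pj pk).
Definition h31 A B C pi pj pk := Ho (cc C pi pj) (cc A pj pk) (cc B pk pi).
Definition h32 A B C pi pj pk := Ho (cc C pi pj) (cc B pk pi) (cc A pj pk).
Definition h33 A B C pi pj pk := Hd (cc C pi pj) (cc A pj pk) (cc B pk pi).

Lemma h21_12 A B C pi pj pk : h21 A B C pi pj pk = h12 A B C pi pj pk.
Proof. unfold h21, h12. apply Ho_sym. Qed.
Lemma h31_13 A B C pi pj pk : h31 A B C pi pj pk = h13 A B C pi pj pk.
Proof. unfold h31, h13. apply Ho_sym. Qed.
Lemma h32_23 A B C pi pj pk : h32 A B C pi pj pk = h23 A B C pi pj pk.
Proof. unfold h32, h23. apply Ho_sym. Qed.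

Lemma thi_path A B C (gi gj gk : R -> R) (t dgi dgj dgk : R) :
  is_derive gi t dgi -> is_derive gj t dgj -> is_derive gk t dgk ->
  inW A B C (gi t) (gj t) (gk t) ->
  is_derive (fun t => theta_i A B C (gi t) (gj t) (gk t)) t
    (h11 A B C (gi t) (gj t) (gk t) * dgi + h12 A B C (gi t) (gj t) (gk t) * dgj
     + h13 A B C (gi t) (gj t) (gk t) * dgk).
Proof. apply theta_i_path. Qed.
Lemma thj_path A B C (gi gj gk : R -> R) (t dgi dgj dgk : R) :
  is_derive gi t dgi -> is_derive gj t dgj -> is_derive gk t dgk ->
  inW A B C (gi t) (gj t) (gk t) ->
  is_derive (fun t => theta_j A B C (gi t) (gj t) (gk t)) t
    (h21 A B C (gi t) (gj t) (gk t) * dgi + h22 A B C (gi t) (gj t) (gk t) * dgj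
     + h23 A B C (gi t) (gj t) (gk t) * dgk).
Proof. apply theta_j_path. Qed.
Lemma thk_path A B C (gi gj gk : R -> R) (t dgi dgj dgk : R) :
  is_derive gi t dgi -> is_derive gj t dgj -> is_derive gk t dgk ->
  inW A B C (gi t) (gj t) (gk t) ->
  is_derive (fun t => theta_k A B C (gi t) (gj t) (gk t)) t
    (h31 A B C (gi t) (gj t) (gk t) * dgi + h32 A B C (gi t) (gj t) (gk t) * dgj
     + h33 A B C (gi t) (gj t) (gk t) * dgk).
Proof. apply theta_k_path. Qed.

Section Cont3.
Context {U : UniformSpace}.
Ltac hcontD := intros Hi Hj Hk W; pose proof W as [W1 [W2 W3]];
  apply cont_Hd; first [apply cont_cc; assumption | apply cc_gt1; assumption].
Ltac hcontO := intros Hi Hj Hk W; pose proof W as [W1 [W2 W3]];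
  apply cont_Ho; first [apply cont_cc; assumption | apply cc_gt1; assumption].
Lemma cont_h11 A B C (fi fj fk : U -> R) x : continuous fi x -> continuous fj x -> continuous fk x ->
  inW A B C (fi x) (fj x) (fk x) -> continuous (fun y => h11 A B C (fi y) (fj y) (fk y)) x.
Proof. hcontD. Qed.
Lemma cont_h12 A B C (fi fj fk : U -> R) x : continuous fi x -> continuous fj x -> continuous fk x ->
  inW A B C (fi x) (fj x) (fk x) -> continuous (fun y => h12 A B C (fi y) (fj y) (fk y)) x.
Proof. hcontO. Qed.
Lemma cont_h13 A B C (fi fj fk : U -> R) x : continuous fi x -> continuous fj x -> continuous fk x ->
  inW A B C (fi x) (fj x) (fk x) -> continuous (fun y => h13 A B C (fi y) (fj y) (fk y)) x.
Proof. hcontO. Qed.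
Lemma cont_h21 A B C (fi fj fk : U -> R) x : continuous fi x -> continuous fj x -> continuous fk x ->
  inW A B C (fi x) (fj x) (fk x) -> continuous (fun y => h21 A B C (fi y) (fj y) (fk y)) x.
Proof. hcontO. Qed.
Lemma cont_h22 A B C (fi fj fk : U -> R) x : continuous fi x -> continuous fj x -> continuous fk x ->
  inW A B C (fi x) (fj x) (fk x) -> continuous (fun y => h22 A B C (fi y) (fj y) (fk y)) x.
Proof. hcontD. Qed.
Lemma cont_h23 A B C (fi fj fk : U -> R) x : continuous fi x -> continuous fj x -> continuous fk x ->
  inW A B C (fi x) (fj x) (fk x) -> continuous (fun y => h23 A B C (fi y) (fj y) (fk y)) x.
Proof. hcontO. Qed.
Lemma cont_h31 A B C (fi fj fk : U -> R) x : continuous fi x -> continuous fj x -> continuous fk x ->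
  inW A B C (fi x) (fj x) (fk x) -> continuous (fun y => h31 A B C (fi y) (fj y) (fk y)) x.
Proof. hcontO. Qed.
Lemma cont_h32 A B C (fi fj fk : U -> R) x : continuous fi x -> continuous fj x -> continuous fk x ->
  inW A B C (fi x) (fj x) (fk x) -> continuous (fun y => h32 A B C (fi y) (fj y) (fk y)) x.
Proof. hcontO. Qed.
Lemma cont_h33 A B C (fi fj fk : U -> R) x : continuous fi x -> continuous fj x -> continuous fk x ->
  inW A B C (fi x) (fj x) (fk x) -> continuous (fun y => h33 A B C (fi y) (fj y) (fk y)) x.
Proof. hcontD. Qed.
End Cont3.

Ltac cont2 := repeat (match goal with
 | |- continuous (fun y => @?f y + @?g y) _ => apply (Cplus f g)
 | |- continuous (fun y => @?f y - @?g y) _ => apply (Cminus f g)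
 | |- continuous (fun y => @?f y * @?g y) _ => apply (Cmult f g)
 | |- continuous (fun y => theta_i ?A ?B ?C (@?f y) (@?g y) (@?h y)) _ => apply (cont_theta_i A B C f g h)
 | |- continuous (fun y => theta_j ?A ?B ?C (@?f y) (@?g y) (@?h y)) _ => apply (cont_theta_j A B C f g h)
 | |- continuous (fun y => theta_k ?A ?B ?C (@?f y) (@?g y) (@?h y)) _ => apply (cont_theta_k A B C f g h)
 | |- continuous (fun y => h11 ?A ?B ?C (@?f y) (@?g y) (@?h y)) _ => apply (cont_h11 A B C f g h)
 | |- continuous (fun y => h12 ?A ?B ?C (@?f y) (@?g y) (@?h y)) _ => apply (cont_h12 A B C f g h)
 | |- continuous (fun y => h13 ?A ?B ?C (@?f y) (@?g y) (@?h y)) _ => apply (cont_h13 A B C f g h)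
 | |- continuous (fun y => h21 ?A ?B ?C (@?f y) (@?g y) (@?h y)) _ => apply (cont_h21 A B C f g h)
 | |- continuous (fun y => h22 ?A ?B ?C (@?f y) (@?g y) (@?h y)) _ => apply (cont_h22 A B C f g h)
 | |- continuous (fun y => h23 ?A ?B ?C (@?f y) (@?g y) (@?h y)) _ => apply (cont_h23 A B C f g h)
 | |- continuous (fun y => h31 ?A ?B ?C (@?f y) (@?g y) (@?h y)) _ => apply (cont_h31 A B C f g h)
 | |- continuous (fun y => h32 ?A ?B ?C (@?f y) (@?g y) (@?h y)) _ => apply (cont_h32 A B C f g h)
 | |- continuous (fun y => h33 ?A ?B ?C (@?f y) (@?g y) (@?h y)) _ => apply (cont_h33 A B C f g h)
 | |- continuous (fun y => fst y) (_, _) => apply continuous_fst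
 | |- continuous (fun y => snd y) (_, _) => apply continuous_snd
 | |- continuous (fun y => y) _ => apply continuous_id
 | |- continuous (fun _ => ?c) _ => apply Cconst
 | |- continuous _ _ => assumption
 end).

Definition Pt (c x v u t : R) := c + t*((x + u*v) - c).

Definition FF A B C ci cj ck xi xj xk vi vj vk u t :=
  theta_i A B C (Pt ci xi vi u t) (Pt cj xj vj u t) (Pt ck xk vk u t) * ((xi + u*vi) - ci)
+ theta_j A B C (Pt ci xi vi u t) (Pt cj xj vj u t) (Pt ck xk vk u t) * ((xj + u*vj) - cj)
+ theta_k A B C (Pt ci xi vi u t) (Pt cj xj vj u t) (Pt ck xk vk u t) * ((xk + u*vk) - ck).

Definition FFs A B C ci cj ck xi xj xk vi vj vk u t :=
  let pi := Pt ci xi vi u t in let pj := Pt cj xj vj u t in let pk := Pt ck xk vk u t in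
  (h11 A B C pi pj pk * (t*vi) + h12 A B C pi pj pk * (t*vj) + h13 A B C pi pj pk * (t*vk))
    * ((xi + u*vi) - ci) + theta_i A B C pi pj pk * vi
+ ((h21 A B C pi pj pk * (t*vi) + h22 A B C pi pj pk * (t*vj) + h23 A B C pi pj pk * (t*vk))
    * ((xj + u*vj) - cj) + theta_j A B C pi pj pk * vj)
+ ((h31 A B C pi pj pk * (t*vi) + h32 A B C pi pj pk * (t*vj) + h33 A B C pi pj pk * (t*vk))
    * ((xk + u*vk) - ck) + theta_k A B C pi pj pk * vk).

Definition GG A B C ci cj ck xi xj xk vi vj vk u t :=
  t * (theta_i A B C (Pt ci xi vi u t) (Pt cj xj vj u t) (Pt ck xk vk u t) * vi
     + theta_j A B C (Pt ci xi vi u t) (Pt cj xj vj u t) (Pt ck xk vk u t) * vj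
     + theta_k A B C (Pt ci xi vi u t) (Pt cj xj vj u t) (Pt ck xk vk u t) * vk).

Definition GGs A B C ci cj ck xi xj xk vi vj vk u t :=
  let pi := Pt ci xi vi u t in let pj := Pt cj xj vj u t in let pk := Pt ck xk vk u t in
  let di := (xi + u*vi) - ci in let dj := (xj + u*vj) - cj in let dk := (xk + u*vk) - ck in
  (theta_i A B C pi pj pk * vi + theta_j A B C pi pj pk * vj + theta_k A B C pi pj pk * vk)
  + t * ((h11 A B C pi pj pk * di + h12 A B C pi pj pk * dj + h13 A B C pi pj pk * dk) * vi
       + (h21 A B C pi pj pk * di + h22 A B C pi pj pk * dj + h23 A B C pi pj pk * dk) * vj
       + (h31 A B C pi pj pk * di + h32 A B C pi pj pk * dj + h33 A B C pi pj pk * dk) * vk).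

Lemma Dlin_u c x v u t : is_derive (fun u => Pt c x v u t) u (t*v).
Proof. unfold Pt. auto_derive; auto. ring. Qed.
Lemma Dlin_t c x v u t : is_derive (fun t => Pt c x v u t) t ((x + u*v) - c).
Proof. unfold Pt. auto_derive; auto. ring. Qed.
Lemma Dz x v c u : is_derive (fun u => (x + u*v) - c) u v.
Proof. auto_derive; auto. ring. Qed.

Lemma FF_deriv A B C ci cj ck xi xj xk vi vj vk u t :
  inW A B C (Pt ci xi vi u t) (Pt cj xj vj u t) (Pt ck xk vk u t) ->
  is_derive (fun u => FF A B C ci cj ck xi xj xk vi vj vk u t) u
            (FFs A B C ci cj ck xi xj xk vi vj vk u t).
Proof.
  intros HW. unfold FF.
  eapply is_derive_eqv.
  { apply Dplus. apply Dplus.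
    - apply Dmult. apply (thi_path A B C (fun u => Pt ci xi vi u t) (fun u => Pt cj xj vj u t)
          (fun u => Pt ck xk vk u t)); auto using Dlin_u. apply Dz.
    - apply Dmult. apply (thj_path A B C (fun u => Pt ci xi vi u t) (fun u => Pt cj xj vj u t)
          (fun u => Pt ck xk vk u t)); auto using Dlin_u. apply Dz.
    - apply Dmult. apply (thk_path A B C (fun u => Pt ci xi vi u t) (fun u => Pt cj xj vj u t)
          (fun u => Pt ck xk vk u t)); auto using Dlin_u. apply Dz. }
  unfold FFs; cbv zeta. match goal with |- ?a = ?b => change (@eq R a b) end. ring.
Qed.

Lemma GG_deriv A B C ci cj ck xi xj xk vi vj vk u t :
  inW A B C (Pt ci xi vi u t) (Pt cj xj vj u t) (Pt ck xk vk u t) ->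
  is_derive (fun t => GG A B C ci cj ck xi xj xk vi vj vk u t) t
            (GGs A B C ci cj ck xi xj xk vi vj vk u t).
Proof.
  intros HW. unfold GG.
  eapply is_derive_eqv.
  { apply Dmult. apply Did. apply Dplus. apply Dplus.
    - apply Dmult. apply (thi_path A B C (fun t => Pt ci xi vi u t) (fun t => Pt cj xj vj u t)
          (fun t => Pt ck xk vk u t)); auto using Dlin_t. apply Dconst.
    - apply Dmult. apply (thj_path A B C (fun t => Pt ci xi vi u t) (fun t => Pt cj xj vj u t)
          (fun t => Pt ck xk vk u t)); auto using Dlin_t. apply Dconst.
    - apply Dmult. apply (thk_path A B C (fun t => Pt ci xi vi u t) (fun t => Pt cj xj vj u t)
          (fun t => Pt ck xk vk u t)); auto using Dlin_t. apply Dconst. }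
  unfold GGs; cbv zeta. match goal with |- ?a = ?b => change (@eq R a b) end. ring.
Qed.

Lemma FFs_GGs A B C ci cj ck xi xj xk vi vj vk u t :
  FFs A B C ci cj ck xi xj xk vi vj vk u t = GGs A B C ci cj ck xi xj xk vi vj vk u t.
Proof. unfold FFs, GGs. rewrite !h21_12, !h31_13, !h32_23. ring. Qed.

Lemma core A B C ci cj ck xi xj xk vi vj vk s :
  inW A B C ci cj ck -> inW A B C (xi+s*vi) (xj+s*vj) (xk+s*vk) ->
  is_derive (fun u => energy A B C ci cj ck (xi+u*vi) (xj+u*vj) (xk+u*vk)) s
   (theta_i A B C (xi+s*vi) (xj+s*vj) (xk+s*vk) * vi
  + theta_j A B C (xi+s*vi) (xj+s*vj) (xk+s*vk) * vj
  + theta_k A B C (xi+s*vi) (xj+s*vj) (xk+s*vk) * vk).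
Proof.
  intros Hc Hz.
  assert (Lz : locally s (fun u => inW A B C (xi+u*vi) (xj+u*vj) (xk+u*vk))).
  { apply (inW_loc A B C (fun u => xi+u*vi) (fun u => xj+u*vj) (fun u => xk+u*vk)); try cont2; auto. }
  assert (PW : forall u t, inW A B C (xi+u*vi) (xj+u*vj) (xk+u*vk) -> 0 <= t <= 1 ->
     inW A B C (Pt ci xi vi u t) (Pt cj xj vj u t) (Pt ck xk vk u t)).
  { intros; unfold Pt; apply inW_conv; auto. }
  assert (M01 : Rmin 0 1 = 0 /\ Rmax 0 1 = 1) by (split; [apply Rmin_left | apply Rmax_right]; lra).
  destruct M01 as [Mi Ma].
  eapply is_derive_eqv.
  { apply (is_derive_RInt_param (fun u t => FF A B C ci cj ck xi xj xk vi vj vk u t) 0 1 s).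
    - generalize Lz. apply filter_imp. intros u Hu t Ht. rewrite Mi, Ma in Ht.
      eexists. apply FF_deriv. apply PW; auto.
    - intros t Ht. rewrite Mi, Ma in Ht. apply continuity_2d_pt_filterlim.
      assert (HP := PW s t Hz Ht).
      change (continuous (fun p : R*R => Derive (fun z => FF A B C ci cj ck xi xj xk vi vj vk z (snd p)) (fst p)) (s,t)).
      apply (continuous_ext_loc (fun p : R*R => Derive (fun z => FF A B C ci cj ck xi xj xk vi vj vk z (snd p)) (fst p))
         (fun p : R*R => FFs A B C ci cj ck xi xj xk vi vj vk (fst p) (snd p))).
      + assert (L2 : locally (s,t) (fun p : R*R => inW A B C (Pt ci xi vi (fst p) (snd p))
            (Pt cj xj vj (fst p) (snd p)) (Pt ck xk vk (fst p) (snd p)))).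
        { apply (inW_loc A B C (fun p : R*R => Pt ci xi vi (fst p) (snd p))
            (fun p : R*R => Pt cj xj vj (fst p) (snd p)) (fun p : R*R => Pt ck xk vk (fst p) (snd p)));
          try (unfold Pt; cont2). exact HP. }
        generalize L2. apply filter_imp. intros p Hp. symmetry. apply is_derive_unique.
        apply FF_deriv. exact Hp.
      + unfold FFs, Pt; cbv zeta. unfold Pt in HP. cont2; simpl; exact HP.
    - generalize Lz. apply filter_imp. intros u Hu. apply (@ex_RInt_continuous R_CompleteNormedModule). intros t Ht.
      rewrite Mi, Ma in Ht. assert (HP := PW u t Hu Ht). unfold FF, Pt. unfold Pt in HP. cont2; exact HP. }
  rewrite (RInt_ext _ (GGs A B C ci cj ck xi xj xk vi vj vk s)).
  2:{ intros t Ht. rewrite Mi, Ma in Ht. rewrite <- FFs_GGs. apply is_derive_unique, FF_deriv, PW; auto; lra. }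
  assert (D1 : forall t, Rmin 0 1 <= t <= Rmax 0 1 ->
     is_derive (GG A B C ci cj ck xi xj xk vi vj vk s) t (GGs A B C ci cj ck xi xj xk vi vj vk s t)).
  { intros t Ht. rewrite Mi, Ma in Ht. apply GG_deriv, PW; auto. }
  assert (D2 : forall t, Rmin 0 1 <= t <= Rmax 0 1 -> continuous (GGs A B C ci cj ck xi xj xk vi vj vk s) t).
  { intros t Ht. rewrite Mi, Ma in Ht. assert (HP := PW s t Hz Ht).
    unfold GGs, Pt; cbv zeta. unfold Pt in HP. cont2; exact HP. }
  rewrite (is_RInt_unique _ _ _ _ (is_RInt_derive _ _ 0 1 D1 D2)).
  unfold minus, plus, opp; simpl. unfold GG, Pt.
  replace (ci + 1 * (xi + s * vi - ci)) with (xi + s*vi) by ring.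
  replace (cj + 1 * (xj + s * vj - cj)) with (xj + s*vj) by ring.
  replace (ck + 1 * (xk + s * vk - ck)) with (xk + s*vk) by ring.
  ring.
Qed.

Lemma ballR (x y e : R) : ball x e y <-> Rabs (y - x) < e.
Proof. unfold ball; simpl; unfold AbsRing_ball, abs, minus, plus, opp; simpl. tauto. Qed.

Lemma cont_eps (I : R -> R) s : continuous I s ->
  forall e, 0 < e -> exists d, 0 < d /\ forall x, Rabs (x - s) < d -> Rabs (I x - I s) < e.
Proof.
  intros Hc e He. destruct (proj1 (filterlim_locally I (I s)) Hc (mkposreal e He)) as [d Hd].
  exists d. split. apply cond_pos. intros x Hx. apply ballR. apply Hd. apply ballR. exact Hx.
Qed.

Lemma prod_vanish (I G : R -> R) (s dG : R) : is_derive G s dG -> G s = 0 -> continuous I s ->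
  is_derive (fun x => I x * G x) s (I s * dG).
Proof.
  intros HG G0 HI. apply is_derive_Reals. apply is_derive_Reals in HG.
  intros e He.
  set (M := Rabs (I s) + 1).
  assert (HM : 0 < M) by (unfold M; pose proof (Rabs_pos (I s)); lra).
  destruct (HG (e / (2*M))) as [d1 Hd1]. apply Rdiv_lt_0_compat; lra.
  destruct (cont_eps I s HI (Rmin 1 (e / (2*(Rabs dG + 1))))) as [d2 [Pd2 Hd2]].
  { apply Rmin_glb_lt. lra. apply Rdiv_lt_0_compat. lra. pose proof (Rabs_pos dG); lra. }
  assert (Pd : 0 < Rmin d1 d2) by (apply Rmin_glb_lt; auto; apply cond_pos).
  exists (mkposreal _ Pd). intros h Hh0 Hh. simpl in Hh.
  assert (Hh1 : Rabs h < d1) by (eapply Rlt_le_trans; [exact Hh | apply Rmin_l]).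
  assert (Hh2 : Rabs h < d2) by (eapply Rlt_le_trans; [exact Hh | apply Rmin_r]).
  specialize (Hd1 h Hh0 Hh1). rewrite G0, Rminus_0_r in Hd1.
  assert (Hd2' := Hd2 (s+h) ltac:(replace (s+h-s) with h by ring; auto)).
  assert (K1 : Rabs (I (s+h) - I s) < 1) by (eapply Rlt_le_trans; [exact Hd2' | apply Rmin_l]).
  assert (K2 : Rabs (I (s+h) - I s) < e / (2*(Rabs dG + 1))) by (eapply Rlt_le_trans; [exact Hd2' | apply Rmin_r]).
  rewrite G0, Rmult_0_r, Rminus_0_r.
  replace (I (s+h) * G (s+h) / h - I s * dG) with
     (I (s+h) * (G (s+h) / h - dG) + (I (s+h) - I s) * dG) by (field; auto).
  assert (KI : Rabs (I (s+h)) <= M).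
  { unfold M. replace (I (s+h)) with ((I (s+h) - I s) + I s) by ring.
    eapply Rle_trans. apply Rabs_triang. lra. }
  eapply Rle_lt_trans. apply Rabs_triang. rewrite !Rabs_mult.
  assert (T1 : Rabs (I (s+h)) * Rabs (G (s+h) / h - dG) <= M * (e/(2*M))).
  { apply Rmult_le_compat; try apply Rabs_pos; lra. }
  assert (T2 : Rabs (I (s+h) - I s) * Rabs dG <= e / (2*(Rabs dG + 1)) * Rabs dG).
  { apply Rmult_le_compat_r. apply Rabs_pos. lra. }
  assert (T3 : e / (2*(Rabs dG + 1)) * Rabs dG < e/2).
  { pose proof (Rabs_pos dG). unfold Rdiv. apply Rmult_lt_reg_r with (2*(Rabs dG+1)). lra.
    field_simplify; lra. }
  assert (T4 : M * (e/(2*M)) = e/2) by (field; lra).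
  lra.
Qed.

Lemma unif3 (th : R -> R -> R -> R) pi pj pk :
  continuous (fun q : (R*R)*R => th (fst (fst q)) (snd (fst q)) (snd q)) ((pi,pj),pk) ->
  forall e, 0 < e -> exists d, 0 < d /\ forall qi qj qk,
    Rabs (qi-pi) < d -> Rabs (qj-pj) < d -> Rabs (qk-pk) < d -> Rabs (th qi qj qk - th pi pj pk) < e.
Proof.
  intros Hc e He.
  destruct (proj1 (filterlim_locally _ _) Hc (mkposreal e He)) as [d Hd].
  exists d. split. apply cond_pos. intros qi qj qk H1 H2 H3.
  assert (K := Hd ((qi,qj),qk)). simpl in K. apply ballR. apply K.
  split; [split|]; apply ballR; auto.
Qed.

Lemma cq1 (p : (R*R)*R) : continuous (fun q : (R*R)*R => fst (fst q)) p.
Proof. destruct p as [[a b] c]. apply (continuous_comp fst fst). apply continuous_fst. apply continuous_fst. Qed.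
Lemma cq2 (p : (R*R)*R) : continuous (fun q : (R*R)*R => snd (fst q)) p.
Proof. destruct p as [[a b] c]. apply (continuous_comp fst snd). apply continuous_fst. apply continuous_snd. Qed.
Lemma cq3 (p : (R*R)*R) : continuous (fun q : (R*R)*R => snd q) p.
Proof. destruct p as [[a b] c]. apply continuous_snd. Qed.

Lemma unif_theta A B C pi pj pk : inW A B C pi pj pk -> forall e, 0 < e -> exists d, 0 < d /\
  forall qi qj qk, Rabs (qi-pi) < d -> Rabs (qj-pj) < d -> Rabs (qk-pk) < d ->
    Rabs (theta_i A B C qi qj qk - theta_i A B C pi pj pk) < e /\
    Rabs (theta_j A B C qi qj qk - theta_j A B C pi pj pk) < e /\
    Rabs (theta_k A B C qi qj qk - theta_k A B C pi pj pk) < e.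
Proof.
  intros HW e He.
  destruct (unif3 (theta_i A B C) pi pj pk
     (cont_theta_i A B C _ _ _ ((pi,pj),pk) (cq1 _) (cq2 _) (cq3 _) HW) e He) as [d1 [P1 H1]].
  destruct (unif3 (theta_j A B C) pi pj pk
     (cont_theta_j A B C _ _ _ ((pi,pj),pk) (cq1 _) (cq2 _) (cq3 _) HW) e He) as [d2 [P2 H2]].
  destruct (unif3 (theta_k A B C) pi pj pk
     (cont_theta_k A B C _ _ _ ((pi,pj),pk) (cq1 _) (cq2 _) (cq3 _) HW) e He) as [d3 [P3 H3]].
  exists (Rmin d1 (Rmin d2 d3)). split. repeat apply Rmin_glb_lt; auto.
  intros qi qj qk Q1 Q2 Q3.
  assert (M1 := Rmin_l d1 (Rmin d2 d3)). assert (M2 := Rmin_r d1 (Rmin d2 d3)).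
  assert (M3 := Rmin_l d2 d3). assert (M4 := Rmin_r d2 d3).
  repeat split; [apply H1 | apply H2 | apply H3]; lra.
Qed.


Ltac Rring := match goal with |- ?a = ?b => change (@eq R a b) end; ring.
Lemma isRI_scal (f : R -> R) a b k : ex_RInt f a b -> is_RInt (fun u => k * f u) a b (k * RInt f a b).
Proof.
  intros Hf. assert (H := RInt_correct (V := R_CompleteNormedModule) f a b Hf).
  exact (is_RInt_scal (V := R_NormedModule) f a b k _ H).
Qed.
Lemma isRI_plus (f g : R -> R) a b If Ig : is_RInt f a b If -> is_RInt g a b Ig ->
  is_RInt (fun u => f u + g u) a b (If + Ig).
Proof. intros H1 H2. exact (is_RInt_plus (V := R_NormedModule) f g a b If Ig H1 H2). Qed.
Lemma RI_lin (f g h : R -> R) a b ci cj ck : ex_RInt f a b -> ex_RInt g a b -> ex_RInt h a b ->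
  RInt (fun u => f u * ci + g u * cj + h u * ck) a b = RInt f a b * ci + RInt g a b * cj + RInt h a b * ck.
Proof.
  intros Hf Hg Hh.
  apply is_RInt_unique.
  apply (is_RInt_ext (fun u => ci * f u + cj * g u + ck * h u)). intros; simpl; ring.
  replace (RInt f a b * ci + RInt g a b * cj + RInt h a b * ck) with
     (ci * RInt f a b + cj * RInt g a b + ck * RInt h a b) by ring.
  apply isRI_plus. apply isRI_plus. all: apply isRI_scal; auto.
Qed.

Lemma M01 : Rmin 0 1 = 0 /\ Rmax 0 1 = 1.
Proof. split; [apply Rmin_left | apply Rmax_right]; lra. Qed.

Lemma exRI_theta A B C pi pj pk qi qj qk : inW A B C pi pj pk -> inW A B C qi qj qk ->
  ex_RInt (fun u => theta_i A B C (pi+u*(qi-pi)) (pj+u*(qj-pj)) (pk+u*(qk-pk))) 0 1 /\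
  ex_RInt (fun u => theta_j A B C (pi+u*(qi-pi)) (pj+u*(qj-pj)) (pk+u*(qk-pk))) 0 1 /\
  ex_RInt (fun u => theta_k A B C (pi+u*(qi-pi)) (pj+u*(qj-pj)) (pk+u*(qk-pk))) 0 1.
Proof.
  intros Hp Hq. destruct M01 as [Mi Ma].
  repeat split; apply (@ex_RInt_continuous R_CompleteNormedModule); intros t Ht; rewrite Mi, Ma in Ht;
  assert (HW := inW_conv A B C pi pj pk qi qj qk t Hp Hq Ht); cont2; exact HW.
Qed.

Lemma SL A B C ci cj ck pi pj pk qi qj qk :
  inW A B C ci cj ck -> inW A B C pi pj pk -> inW A B C qi qj qk ->
  energy A B C ci cj ck qi qj qk - energy A B C ci cj ck pi pj pk =
    RInt (fun u => theta_i A B C (pi+u*(qi-pi)) (pj+u*(qj-pj)) (pk+u*(qk-pk))) 0 1 * (qi-pi)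
  + RInt (fun u => theta_j A B C (pi+u*(qi-pi)) (pj+u*(qj-pj)) (pk+u*(qk-pk))) 0 1 * (qj-pj)
  + RInt (fun u => theta_k A B C (pi+u*(qi-pi)) (pj+u*(qj-pj)) (pk+u*(qk-pk))) 0 1 * (qk-pk).
Proof.
  intros Hc Hp Hq. destruct M01 as [Mi Ma].
  set (f := fun u => theta_i A B C (pi+u*(qi-pi)) (pj+u*(qj-pj)) (pk+u*(qk-pk)) * (qi-pi)
          + theta_j A B C (pi+u*(qi-pi)) (pj+u*(qj-pj)) (pk+u*(qk-pk)) * (qj-pj)
          + theta_k A B C (pi+u*(qi-pi)) (pj+u*(qj-pj)) (pk+u*(qk-pk)) * (qk-pk)).
  assert (D1 : forall u, Rmin 0 1 <= u <= Rmax 0 1 ->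
    is_derive (fun u => energy A B C ci cj ck (pi+u*(qi-pi)) (pj+u*(qj-pj)) (pk+u*(qk-pk))) u (f u)).
  { intros u Hu. rewrite Mi, Ma in Hu. apply core; auto. apply inW_conv; auto. }
  assert (D2 : forall u, Rmin 0 1 <= u <= Rmax 0 1 -> continuous f u).
  { intros u Hu. rewrite Mi, Ma in Hu. assert (HW := inW_conv A B C pi pj pk qi qj qk u Hp Hq Hu).
    unfold f. cont2; exact HW. }
  assert (H1 := is_RInt_unique _ _ _ _ (is_RInt_derive _ _ 0 1 D1 D2)).
  destruct (exRI_theta A B C pi pj pk qi qj qk Hp Hq) as [E1 [E2 E3]].
  assert (H2 := RI_lin _ _ _ 0 1 (qi-pi) (qj-pj) (qk-pk) E1 E2 E3).
  rewrite <- H2. fold f. rewrite H1.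
  unfold minus, plus, opp; simpl.
  replace (pi + 1*(qi-pi)) with qi by ring. replace (pj + 1*(qj-pj)) with qj by ring.
  replace (pk + 1*(qk-pk)) with qk by ring.
  replace (pi + 0*(qi-pi)) with pi by ring. replace (pj + 0*(qj-pj)) with pj by ring.
  replace (pk + 0*(qk-pk)) with pk by ring. ring.
Qed.

Lemma RI_minus_const (f : R -> R) c : ex_RInt f 0 1 -> RInt (fun u => f u - c) 0 1 = RInt f 0 1 - c.
Proof.
  intros Hf. apply is_RInt_unique.
  assert (H := RInt_correct (V := R_CompleteNormedModule) f 0 1 Hf).
  assert (H2 := is_RInt_const (V := R_NormedModule) 0 1 c).
  assert (H3 := is_RInt_minus (V := R_NormedModule) f (fun _ => c) 0 1 _ _ H H2).
  replace (RInt f 0 1 - c) with (minus (RInt f 0 1) (scal (1 - 0) c)).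
  exact H3. unfold minus, plus, opp, scal; simpl; unfold mult; simpl. ring.
Qed.

Lemma RI_const_fun (f : R -> R) c : (forall u, f u = c) -> RInt f 0 1 = c.
Proof.
  intros H. rewrite (RInt_ext f (fun _ => c)). rewrite RInt_const. unfold scal; simpl; unfold mult; simpl. ring.
  intros; apply H.
Qed.

Lemma Icont (th : R -> R -> R -> R) (gi gj gk : R -> R) s :
  continuous gi s -> continuous gj s -> continuous gk s ->
  (forall e, 0 < e -> exists d, 0 < d /\ forall qi qj qk,
    Rabs (qi - gi s) < d -> Rabs (qj - gj s) < d -> Rabs (qk - gk s) < d ->
    Rabs (th qi qj qk - th (gi s) (gj s) (gk s)) < e) ->
  locally s (fun x => ex_RInt (fun u => th (gi s + u*(gi x - gi s)) (gj s + u*(gj x - gj s))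
                                            (gk s + u*(gk x - gk s))) 0 1) ->
  continuous (fun x => RInt (fun u => th (gi s + u*(gi x - gi s)) (gj s + u*(gj x - gj s))
                                            (gk s + u*(gk x - gk s))) 0 1) s /\
  RInt (fun u => th (gi s + u*(gi s - gi s)) (gj s + u*(gj s - gj s)) (gk s + u*(gk s - gk s))) 0 1
    = th (gi s) (gj s) (gk s).
Proof.
  intros Ci Cj Ck Hu [d0 Hex].
  assert (I0 : RInt (fun u => th (gi s + u*(gi s - gi s)) (gj s + u*(gj s - gj s)) (gk s + u*(gk s - gk s))) 0 1
    = th (gi s) (gj s) (gk s)).
  { apply RI_const_fun. intros u. repeat rewrite Rminus_diag, Rmult_0_r, Rplus_0_r. reflexivity. }
  split; auto.
  apply filterlim_locally. intros eps. rewrite I0.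
  destruct (Hu (eps/2)) as [d [Pd Hd]]. destruct eps; simpl; lra.
  destruct (cont_eps gi s Ci d Pd) as [di [Pdi Hdi]].
  destruct (cont_eps gj s Cj d Pd) as [dj [Pdj Hdj]].
  destruct (cont_eps gk s Ck d Pd) as [dk [Pdk Hdk]].
  assert (Pm : 0 < Rmin d0 (Rmin di (Rmin dj dk))).
  { repeat apply Rmin_glb_lt; auto. apply cond_pos. }
  exists (mkposreal _ Pm). intros x Hx. apply ballR in Hx.
  change (Rabs (x - s) < Rmin d0 (Rmin di (Rmin dj dk))) in Hx.
  assert (M1 := Rmin_l d0 (Rmin di (Rmin dj dk))). assert (M2 := Rmin_r d0 (Rmin di (Rmin dj dk))).
  assert (M3 := Rmin_l di (Rmin dj dk)). assert (M4 := Rmin_r di (Rmin dj dk)).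
  assert (M5 := Rmin_l dj dk). assert (M6 := Rmin_r dj dk).
  assert (Ex : ex_RInt (fun u => th (gi s + u*(gi x - gi s)) (gj s + u*(gj x - gj s))
                                            (gk s + u*(gk x - gk s))) 0 1).
  { apply Hex. apply ballR. lra. }
  apply ballR. rewrite <- RI_minus_const by exact Ex.
  eapply Rle_lt_trans. apply abs_RInt_le_const with (M := eps/2). lra.
  apply (ex_RInt_minus (V := R_NormedModule)). exact Ex. apply ex_RInt_const.
  { intros u Hu0. left. apply Hd.
    - replace (gi s + u * (gi x - gi s) - gi s) with (u * (gi x - gi s)) by ring.
      rewrite Rabs_mult. assert (Rabs u <= 1) by (apply Rabs_le; lra).
      assert (Rabs (gi x - gi s) < d) by (apply Hdi; lra). pose proof (Rabs_pos u). pose proof (Rabs_pos (gi x - gi s)). nra.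
    - replace (gj s + u * (gj x - gj s) - gj s) with (u * (gj x - gj s)) by ring.
      rewrite Rabs_mult. assert (Rabs u <= 1) by (apply Rabs_le; lra).
      assert (Rabs (gj x - gj s) < d) by (apply Hdj; lra). pose proof (Rabs_pos u). pose proof (Rabs_pos (gj x - gj s)). nra.
    - replace (gk s + u * (gk x - gk s) - gk s) with (u * (gk x - gk s)) by ring.
      rewrite Rabs_mult. assert (Rabs u <= 1) by (apply Rabs_le; lra).
      assert (Rabs (gk x - gk s) < d) by (apply Hdk; lra). pose proof (Rabs_pos u). pose proof (Rabs_pos (gk x - gk s)). nra. }
  destruct eps; simpl; lra.
Qed.

Lemma Eg_deriv A B C ci cj ck (gi gj gk : R -> R) (s dgi dgj dgk : R) :
  inW A B C ci cj ck -> is_derive gi s dgi -> is_derive gj s dgj -> is_derive gk s dgk ->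
  inW A B C (gi s) (gj s) (gk s) ->
  is_derive (fun x => energy A B C ci cj ck (gi x) (gj x) (gk x)) s
    (theta_i A B C (gi s) (gj s) (gk s) * dgi + theta_j A B C (gi s) (gj s) (gk s) * dgj
     + theta_k A B C (gi s) (gj s) (gk s) * dgk).
Proof.
  intros Hc Di Dj Dk Hp.
  assert (Ci := Cr _ _ _ Di). assert (Cj := Cr _ _ _ Dj). assert (Ck := Cr _ _ _ Dk).
  assert (Lg : locally s (fun x => inW A B C (gi x) (gj x) (gk x))) by (apply inW_loc; auto).
  assert (Lex : forall th : R -> R -> R -> R,
     (forall qi qj qk, inW A B C qi qj qk -> ex_RInt (fun u => th (gi s + u*(qi - gi s)) (gj s + u*(qj - gj s))
          (gk s + u*(qk - gk s))) 0 1) ->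
     locally s (fun x => ex_RInt (fun u => th (gi s + u*(gi x - gi s)) (gj s + u*(gj x - gj s))
                                            (gk s + u*(gk x - gk s))) 0 1)).
  { intros th Hth. generalize Lg. apply filter_imp. intros x Hx. apply Hth; auto. }
  assert (U := unif_theta A B C _ _ _ Hp).
  destruct (Icont (theta_i A B C) gi gj gk s Ci Cj Ck) as [CI EI].
  { intros e He. destruct (U e He) as [d [Pd Hd]]. exists d; split; auto.
    intros qi qj qk H1 H2 H3; exact (proj1 (Hd qi qj qk H1 H2 H3)). }
  { apply Lex. intros qi qj qk Hq; exact (proj1 (exRI_theta A B C _ _ _ qi qj qk Hp Hq)). }
  destruct (Icont (theta_j A B C) gi gj gk s Ci Cj Ck) as [CJ EJ].
  { intros e He. destruct (U e He) as [d [Pd Hd]]. exists d; split; auto.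
    intros qi qj qk H1 H2 H3; exact ((fun H => proj1 (proj2 H)) (Hd qi qj qk H1 H2 H3)). }
  { apply Lex. intros qi qj qk Hq; exact ((fun H => proj1 (proj2 H)) (exRI_theta A B C _ _ _ qi qj qk Hp Hq)). }
  destruct (Icont (theta_k A B C) gi gj gk s Ci Cj Ck) as [CK EK].
  { intros e He. destruct (U e He) as [d [Pd Hd]]. exists d; split; auto.
    intros qi qj qk H1 H2 H3; exact ((fun H => proj2 (proj2 H)) (Hd qi qj qk H1 H2 H3)). }
  { apply Lex. intros qi qj qk Hq; exact ((fun H => proj2 (proj2 H)) (exRI_theta A B C _ _ _ qi qj qk Hp Hq)). }
  set (Ii := fun x => RInt (fun u => theta_i A B C (gi s + u*(gi x - gi s)) (gj s + u*(gj x - gj s))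
                                            (gk s + u*(gk x - gk s))) 0 1) in *.
  set (Ij := fun x => RInt (fun u => theta_j A B C (gi s + u*(gi x - gi s)) (gj s + u*(gj x - gj s))
                                            (gk s + u*(gk x - gk s))) 0 1) in *.
  set (Ik := fun x => RInt (fun u => theta_k A B C (gi s + u*(gi x - gi s)) (gj s + u*(gj x - gj s))
                                            (gk s + u*(gk x - gk s))) 0 1) in *.
  assert (PV : forall (I g : R -> R) dg, is_derive g s dg -> continuous I s ->
      is_derive (fun x => I x * (g x - g s)) s (I s * dg)).
  { intros I g dg Hg HI. eapply is_derive_eqv.
    apply (prod_vanish I (fun x => g x - g s)). apply Dminus. exact Hg. apply Dconst.
    ring. exact HI. Rring. }
  apply (is_derive_ext_loc (fun x => Ii x * (gi x - gi s) + Ij x * (gj x - gj s) + Ik x * (gk x - gk s)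
       + energy A B C ci cj ck (gi s) (gj s) (gk s))).
  { generalize Lg. apply filter_imp. intros x Hx.
    assert (H := SL A B C ci cj ck (gi s) (gj s) (gk s) (gi x) (gj x) (gk x) Hc Hp Hx).
    unfold Ii, Ij, Ik. lra. }
  eapply is_derive_eqv.
  { apply Dplus. apply Dplus. apply Dplus. exact (PV Ii gi dgi Di CI). exact (PV Ij gj dgj Dj CJ). exact (PV Ik gk dgk Dk CK). apply Dconst. }
  change (Ii s) with (RInt (fun u => theta_i A B C (gi s + u*(gi s - gi s)) (gj s + u*(gj s - gj s))
                                            (gk s + u*(gk s - gk s))) 0 1).
  change (Ij s) with (RInt (fun u => theta_j A B C (gi s + u*(gi s - gi s)) (gj s + u*(gj s - gj s))
                                            (gk s + u*(gk s - gk s))) 0 1).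
  change (Ik s) with (RInt (fun u => theta_k A B C (gi s + u*(gi s - gi s)) (gj s + u*(gj s - gj s))
                                            (gk s + u*(gk s - gk s))) 0 1).
  rewrite EI, EJ, EK. Rring.
Qed.


Lemma Cpt (f : R -> R) x d : is_derive f x d -> continuity_pt f x.
Proof. intros H. apply continuity_pt_filterlim. exact (Cr f x d H). Qed.

Lemma strict_concave_1d (phi psi dpsi : R -> R) :
  (forall s, 0 <= s <= 1 -> is_derive phi s (psi s)) ->
  (forall s, 0 <= s <= 1 -> is_derive psi s (dpsi s)) ->
  (forall s, 0 <= s <= 1 -> dpsi s < 0) ->
  forall t, 0 < t < 1 -> t * phi 1 + (1-t) * phi 0 < phi t.
Proof.
  intros Dphi Dpsi Neg t Ht.
  assert (dec : forall a b, 0 <= a -> a < b -> b <= 1 -> psi b < psi a).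
  { intros a b Ha Hab Hb.
    destruct (MVT_gen psi a b dpsi) as [c [Hc Ec]].
    - intros x Hx. rewrite Rmin_left, Rmax_right in Hx by lra. apply Dpsi; lra.
    - intros x Hx. rewrite Rmin_left, Rmax_right in Hx by lra. eapply Cpt. apply Dpsi; lra.
    - rewrite Rmin_left, Rmax_right in Hc by lra.
      assert (dpsi c < 0) by (apply Neg; lra).
      assert (dpsi c * (b - a) < 0) by (apply Rmult_neg_pos; lra). lra. }
  assert (noninc : forall a b, 0 <= a -> a <= b -> b <= 1 -> psi b <= psi a).
  { intros a b Ha Hab Hb. destruct (Req_dec a b) as [E|E]. subst; lra. left; apply dec; lra. }
  assert (mv : forall a b, 0 <= a -> a < b -> b <= 1 ->
     (b - a) * psi b <= phi b - phi a <= (b - a) * psi a).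
  { intros a b Ha Hab Hb.
    destruct (MVT_gen phi a b psi) as [c [Hc Ec]].
    - intros x Hx. rewrite Rmin_left, Rmax_right in Hx by lra. apply Dphi; lra.
    - intros x Hx. rewrite Rmin_left, Rmax_right in Hx by lra. eapply Cpt. apply Dphi; lra.
    - rewrite Rmin_left, Rmax_right in Hc by lra.
      assert (psi b <= psi c) by (apply noninc; lra).
      assert (psi c <= psi a) by (apply noninc; lra).
      rewrite Ec. split; apply Rmult_le_compat_r with (r := b - a) in H; try lra.
      apply Rmult_le_compat_r with (r := b - a) in H0; lra. }
  set (m1 := t/2). set (m2 := (1+t)/2).
  destruct (mv 0 m1) as [A1 _]; try (unfold m1; lra).
  destruct (mv m1 t) as [A2 _]; try (unfold m1; lra).
  destruct (mv t m2) as [_ A3]; try (unfold m2; lra).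
  destruct (mv m2 1) as [_ A4]; try (unfold m2; lra).
  assert (P1 : psi t < psi m1) by (apply dec; unfold m1; lra).
  assert (P2 : psi m2 < psi t) by (apply dec; unfold m2; lra).
  assert (L1 : t * psi t < phi t - phi 0).
  { assert (m1 * psi t < m1 * psi m1) by (apply Rmult_lt_compat_l; [unfold m1; lra | exact P1]).
    replace (m1 - 0) with m1 in A1 by ring.
    assert (t * psi t = m1 * psi t + (t - m1) * psi t) by ring. lra. }
  assert (L2 : phi 1 - phi t < (1 - t) * psi t).
  { assert ((1 - m2) * psi m2 < (1 - m2) * psi t) by (apply Rmult_lt_compat_l; [unfold m2; lra | exact P2]).
    assert ((1 - t) * psi t = (m2 - t) * psi t + (1 - m2) * psi t) by (unfold m2; ring). lra. }
  assert (L1' : (1-t) * (t * psi t) < (1-t) * (phi t - phi 0)) by (apply Rmult_lt_compat_l; lra).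
  assert (L2' : t * (phi 1 - phi t) < t * ((1 - t) * psi t)) by (apply Rmult_lt_compat_l; lra).
  nra.
Qed.

Lemma Dline y d s : is_derive (fun s => y + s*d) s d.
Proof. auto_derive; auto. ring. Qed.

Lemma energy_cc A B C ci cj ck : energy A B C ci cj ck ci cj ck = 0.
Proof.
  unfold energy. apply RI_const_fun. intros u. rewrite !Rminus_diag, !Rmult_0_r. ring.
Qed.

Lemma pd_i_j A B C wi wj wk : inW A B C wi wj wk ->
  is_derive (fun x => theta_i A B C wi x wk) wj (h12 A B C wi wj wk).
Proof. intros H. eapply is_derive_eqv.
  apply (thi_path A B C (fun _ => wi) (fun x => x) (fun _ => wk) wj 0 1 0); auto using Dconst, Did. Rring. Qed.
Lemma pd_i_k A B C wi wj wk : inW A B C wi wj wk ->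
  is_derive (fun x => theta_i A B C wi wj x) wk (h13 A B C wi wj wk).
Proof. intros H. eapply is_derive_eqv.
  apply (thi_path A B C (fun _ => wi) (fun _ => wj) (fun x => x) wk 0 0 1); auto using Dconst, Did. Rring. Qed.
Lemma pd_j_i A B C wi wj wk : inW A B C wi wj wk ->
  is_derive (fun x => theta_j A B C x wj wk) wi (h21 A B C wi wj wk).
Proof. intros H. eapply is_derive_eqv.
  apply (thj_path A B C (fun x => x) (fun _ => wj) (fun _ => wk) wi 1 0 0); auto using Dconst, Did. Rring. Qed.
Lemma pd_j_k A B C wi wj wk : inW A B C wi wj wk ->
  is_derive (fun x => theta_j A B C wi wj x) wk (h23 A B C wi wj wk).
Proof. intros H. eapply is_derive_eqv.
  apply (thj_path A B C (fun _ => wi) (fun _ => wj) (fun x => x) wk 0 0 1); auto using Dconst, Did. Rring. Qed.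
Lemma pd_k_i A B C wi wj wk : inW A B C wi wj wk ->
  is_derive (fun x => theta_k A B C x wj wk) wi (h31 A B C wi wj wk).
Proof. intros H. eapply is_derive_eqv.
  apply (thk_path A B C (fun x => x) (fun _ => wj) (fun _ => wk) wi 1 0 0); auto using Dconst, Did. Rring. Qed.
Lemma pd_k_j A B C wi wj wk : inW A B C wi wj wk ->
  is_derive (fun x => theta_k A B C wi x wk) wj (h32 A B C wi wj wk).
Proof. intros H. eapply is_derive_eqv.
  apply (thk_path A B C (fun _ => wi) (fun x => x) (fun _ => wk) wj 0 1 0); auto using Dconst, Did. Rring. Qed.

Lemma shift_deriv (G f : R -> R) a l : is_derive G 0 l -> (forall x, G (x - a) = f x) -> is_derive f a l.
Proof.
  intros HG Hf. apply (is_derive_ext (fun x => G (x - a))). exact Hf.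
  eapply is_derive_eqv. apply (Dcomp G (fun x => x - a)).
  replace (a - a) with 0 by ring. exact HG.
  apply Dminus. apply Did. apply Dconst. Rring.
Qed.

Lemma part4 A B C ci cj ck wi wj wk : inW A B C ci cj ck -> inW A B C wi wj wk ->
  is_derive (fun x => energy A B C ci cj ck x wj wk) wi (theta_i A B C wi wj wk) /\
  is_derive (fun x => energy A B C ci cj ck wi x wk) wj (theta_j A B C wi wj wk) /\
  is_derive (fun x => energy A B C ci cj ck wi wj x) wk (theta_k A B C wi wj wk).
Proof.
  intros Hc Hw.
  assert (Z : forall a d, a + 0 * d = a) by (intros; ring).
  assert (Hw' : inW A B C (wi + 0*1) (wj + 0*0) (wk + 0*0)) by (rewrite !Z; exact Hw).
  assert (Hw2 : inW A B C (wi + 0*0) (wj + 0*1) (wk + 0*0)) by (rewrite !Z; exact Hw).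
  assert (Hw3 : inW A B C (wi + 0*0) (wj + 0*0) (wk + 0*1)) by (rewrite !Z; exact Hw).
  split; [|split].
  - eapply shift_deriv. eapply is_derive_eqv. apply (core A B C ci cj ck wi wj wk 1 0 0 0 Hc Hw').
    rewrite !Z. Rring.
    intros x. simpl. f_equal; ring.
  - eapply shift_deriv. eapply is_derive_eqv. apply (core A B C ci cj ck wi wj wk 0 1 0 0 Hc Hw2).
    rewrite !Z. Rring.
    intros x. simpl. f_equal; ring.
  - eapply shift_deriv. eapply is_derive_eqv. apply (core A B C ci cj ck wi wj wk 0 0 1 0 Hc Hw3).
    rewrite !Z. Rring.
    intros x. simpl. f_equal; ring.
Qed.

Lemma part3 A B C ci cj ck xi xj xk yi yj yk t :
  inW A B C ci cj ck -> inW A B C xi xj xk -> inW A B C yi yj yk ->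
  (xi, xj, xk) <> (yi, yj, yk) -> 0 < t < 1 ->
  t * energy A B C ci cj ck xi xj xk + (1 - t) * energy A B C ci cj ck yi yj yk <
  energy A B C ci cj ck (t * xi + (1 - t) * yi) (t * xj + (1 - t) * yj) (t * xk + (1 - t) * yk).
Proof.
  intros Hc Hx Hy Hne Ht.
  set (vi := xi - yi). set (vj := xj - yj). set (vk := xk - yk).
  assert (Hv : vi <> 0 \/ vj <> 0 \/ vk <> 0).
  { destruct (Req_dec vi 0); destruct (Req_dec vj 0); destruct (Req_dec vk 0); auto.
    exfalso; apply Hne. unfold vi, vj, vk in *. f_equal; [f_equal|]; lra. }
  set (phi := fun s => energy A B C ci cj ck (yi + s*vi) (yj + s*vj) (yk + s*vk)).
  set (psi := fun s => theta_i A B C (yi + s*vi) (yj + s*vj) (yk + s*vk) * vi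
                    + theta_j A B C (yi + s*vi) (yj + s*vj) (yk + s*vk) * vj
                    + theta_k A B C (yi + s*vi) (yj + s*vj) (yk + s*vk) * vk).
  set (dpsi := fun s => let pi := yi + s*vi in let pj := yj + s*vj in let pk := yk + s*vk in
      (h11 A B C pi pj pk * vi + h12 A B C pi pj pk * vj + h13 A B C pi pj pk * vk) * vi
    + (h21 A B C pi pj pk * vi + h22 A B C pi pj pk * vj + h23 A B C pi pj pk * vk) * vj
    + (h31 A B C pi pj pk * vi + h32 A B C pi pj pk * vj + h33 A B C pi pj pk * vk) * vk).
  assert (HW : forall s, 0 <= s <= 1 -> inW A B C (yi + s*vi) (yj + s*vj) (yk + s*vk)).
  { intros s Hs. unfold vi, vj, vk. apply inW_conv; auto. }
  assert (K := strict_concave_1d phi psi dpsi).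
  assert (E1 : phi 1 = energy A B C ci cj ck xi xj xk).
  { unfold phi, vi, vj, vk. f_equal; ring. }
  assert (E0 : phi 0 = energy A B C ci cj ck yi yj yk).
  { unfold phi. f_equal; ring. }
  assert (Et : phi t = energy A B C ci cj ck (t * xi + (1 - t) * yi) (t * xj + (1 - t) * yj) (t * xk + (1 - t) * yk)).
  { unfold phi, vi, vj, vk. f_equal; ring. }
  rewrite <- E1, <- E0, <- Et. apply K; auto.
  - intros s Hs. unfold phi, psi. apply core; auto.
  - intros s Hs. unfold psi, dpsi. cbv zeta. assert (H := HW s Hs).
    eapply is_derive_eqv.
    { apply Dplus. apply Dplus.
      - apply Dmult. apply (thi_path A B C (fun s => yi + s*vi) (fun s => yj + s*vj) (fun s => yk + s*vk));
          try apply Dline; exact H. apply Dconst.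
      - apply Dmult. apply (thj_path A B C (fun s => yi + s*vi) (fun s => yj + s*vj) (fun s => yk + s*vk));
          try apply Dline; exact H. apply Dconst.
      - apply Dmult. apply (thk_path A B C (fun s => yi + s*vi) (fun s => yj + s*vj) (fun s => yk + s*vk));
          try apply Dline; exact H. apply Dconst. }
    cbv beta. Rring.
  - intros s Hs. unfold dpsi; cbv zeta. destruct (HW s Hs) as [W1 [W2 W3]].
    unfold h11, h12, h13, h21, h22, h23, h31, h32, h33.
    apply quad_neg; auto; apply cc_gt1; auto.
Qed.

Theorem corollary4 (l0jk l0ki l0ij : R) (ci cj ck : R) :
  0 < l0jk -> 0 < l0ki -> 0 < l0ij ->
  inW l0jk l0ki l0ij ci cj ck ->
  let th_i := theta_i l0jk l0ki l0ij in
  let th_j := theta_j l0jk l0ki l0ij in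
  let th_k := theta_k l0jk l0ki l0ij in
  let E := energy l0jk l0ki l0ij ci cj ck in
  (* (1) the 1-form th_i dw_i + th_j dw_j + th_k dw_k is closed on W *)
  (forall wi wj wk, inW l0jk l0ki l0ij wi wj wk ->
     ex_derive (fun x => th_i wi x wk) wj /\ ex_derive (fun x => th_j x wj wk) wi /\
     ex_derive (fun x => th_j wi wj x) wk /\ ex_derive (fun x => th_k wi x wk) wj /\
     ex_derive (fun x => th_k x wj wk) wi /\ ex_derive (fun x => th_i wi wj x) wk /\
     Derive (fun x => th_i wi x wk) wj = Derive (fun x => th_j x wj wk) wi /\
     Derive (fun x => th_j wi wj x) wk = Derive (fun x => th_k wi x wk) wj /\
     Derive (fun x => th_k x wj wk) wi = Derive (fun x => th_i wi wj x) wk) /\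
  (* (2) well-definedness: the integral along any C^1 path in W from c to x equals E x *)
  (forall (gi gj gk dgi dgj dgk : R -> R),
     (forall t, 0 <= t <= 1 ->
        is_derive gi t (dgi t) /\ is_derive gj t (dgj t) /\ is_derive gk t (dgk t) /\
        continuous dgi t /\ continuous dgj t /\ continuous dgk t /\
        inW l0jk l0ki l0ij (gi t) (gj t) (gk t)) ->
     gi 0 = ci -> gj 0 = cj -> gk 0 = ck ->
     is_RInt (fun t => th_i (gi t) (gj t) (gk t) * dgi t
                     + th_j (gi t) (gj t) (gk t) * dgj t
                     + th_k (gi t) (gj t) (gk t) * dgk t) 0 1
             (E (gi 1) (gj 1) (gk 1))) /\
  (* (3) E is strictly concave on W *)
  (forall xi xj xk yi yj yk t,
     inW l0jk l0ki l0ij xi xj xk -> inW l0jk l0ki l0ij yi yj yk ->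
     (xi, xj, xk) <> (yi, yj, yk) -> 0 < t < 1 ->
     t * E xi xj xk + (1 - t) * E yi yj yk <
     E (t * xi + (1 - t) * yi) (t * xj + (1 - t) * yj) (t * xk + (1 - t) * yk)) /\
  (* (4) partial derivatives of E *)
  (forall wi wj wk, inW l0jk l0ki l0ij wi wj wk ->
     is_derive (fun x => E x wj wk) wi (th_i wi wj wk) /\
     is_derive (fun x => E wi x wk) wj (th_j wi wj wk) /\
     is_derive (fun x => E wi wj x) wk (th_k wi wj wk)).
Proof.
  intros P1 P2 P3 Hc. cbv zeta.
  split; [| split; [| split]].
  -
    intros wi wj wk Hw.
    assert (a1 := pd_i_j l0jk l0ki l0ij wi wj wk Hw).
    assert (a2 := pd_j_i l0jk l0ki l0ij wi wj wk Hw).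
    assert (a3 := pd_j_k l0jk l0ki l0ij wi wj wk Hw).
    assert (a4 := pd_k_j l0jk l0ki l0ij wi wj wk Hw).
    assert (a5 := pd_k_i l0jk l0ki l0ij wi wj wk Hw).
    assert (a6 := pd_i_k l0jk l0ki l0ij wi wj wk Hw).
    split. eexists; exact a1. split. eexists; exact a2. split. eexists; exact a3.
    split. eexists; exact a4. split. eexists; exact a5. split. eexists; exact a6.
    split; [| split].
    + replace (Derive (fun x => theta_i l0jk l0ki l0ij wi x wk) wj) with (h12 l0jk l0ki l0ij wi wj wk)
        by (symmetry; apply is_derive_unique; exact a1).
      replace (Derive (fun x => theta_j l0jk l0ki l0ij x wj wk) wi) with (h21 l0jk l0ki l0ij wi wj wk)
        by (symmetry; apply is_derive_unique; exact a2).
      symmetry; apply h21_12.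
    + replace (Derive (fun x => theta_j l0jk l0ki l0ij wi wj x) wk) with (h23 l0jk l0ki l0ij wi wj wk)
        by (symmetry; apply is_derive_unique; exact a3).
      replace (Derive (fun x => theta_k l0jk l0ki l0ij wi x wk) wj) with (h32 l0jk l0ki l0ij wi wj wk)
        by (symmetry; apply is_derive_unique; exact a4).
      symmetry; apply h32_23.
    + replace (Derive (fun x => theta_k l0jk l0ki l0ij x wj wk) wi) with (h31 l0jk l0ki l0ij wi wj wk)
        by (symmetry; apply is_derive_unique; exact a5).
      replace (Derive (fun x => theta_i l0jk l0ki l0ij wi wj x) wk) with (h13 l0jk l0ki l0ij wi wj wk)
        by (symmetry; apply is_derive_unique; exact a6).
      apply h31_13.
  -
    intros gi gj gk dgi dgj dgk Hg G0i G0j G0k.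
    assert (M := M01). destruct M as [Mi Ma].
    assert (D1 : forall t, Rmin 0 1 <= t <= Rmax 0 1 ->
      is_derive (fun t => energy l0jk l0ki l0ij ci cj ck (gi t) (gj t) (gk t)) t
        (theta_i l0jk l0ki l0ij (gi t) (gj t) (gk t) * dgi t
       + theta_j l0jk l0ki l0ij (gi t) (gj t) (gk t) * dgj t
       + theta_k l0jk l0ki l0ij (gi t) (gj t) (gk t) * dgk t)).
    { intros t Ht. rewrite Mi, Ma in Ht. destruct (Hg t Ht) as [Di [Dj [Dk [_ [_ [_ W]]]]]].
      apply Eg_deriv; auto. }
    assert (D2 : forall t, Rmin 0 1 <= t <= Rmax 0 1 ->
      continuous (fun t => theta_i l0jk l0ki l0ij (gi t) (gj t) (gk t) * dgi t
       + theta_j l0jk l0ki l0ij (gi t) (gj t) (gk t) * dgj t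
       + theta_k l0jk l0ki l0ij (gi t) (gj t) (gk t) * dgk t) t).
    { intros t Ht. rewrite Mi, Ma in Ht. destruct (Hg t Ht) as [Di [Dj [Dk [Ci [Cj [Ck W]]]]]].
      assert (Ci' := Cr _ _ _ Di). assert (Cj' := Cr _ _ _ Dj). assert (Ck' := Cr _ _ _ Dk).
      cont2; exact W. }
    assert (H := is_RInt_derive _ _ 0 1 D1 D2).
    cbv beta in H. rewrite G0i, G0j, G0k, energy_cc in H.
    replace (energy l0jk l0ki l0ij ci cj ck (gi 1) (gj 1) (gk 1)) with
      (minus (energy l0jk l0ki l0ij ci cj ck (gi 1) (gj 1) (gk 1)) 0).
    exact H. unfold minus, plus, opp; simpl. ring.
  -
    intros xi xj xk yi yj yk t Hx Hy Hne Ht. apply part3; auto.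
  -
    intros wi wj wk Hw. apply part4; auto.
Qed.
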